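(* Let $n$ be a non-negative integer and $r,s\in\mathbb{C}\setminus\mathbb{Z}^{-}$ with $s\neq0$ and $r-s\notin\mathbb{Z}^{-}$. Then \[ \begin{aligned} &\sum_{k=0}^{n}\binom{n}{k}\frac{H_{n-k+r-s}}{(k+2)(k+s)\binom{n+r}{k+s}}-H_{n+r}\sum_{k=0}^{n}\binom{n}{k}\frac{1}{(k+2)(k+s)\binom{n+r}{k+s}}\\ &\quad=H_{r-s}\sum_{k=0}^{n}\binom{n}{k}\frac{(-1)^k}{(k+1)(k+2)(k+s)\binom{k+r}{k+s}}-\sum_{k=0}^{n}\binom{n}{k}\frac{(-1)^kH_{k+r}}{(k+1)(k+2)(k+s)\binom{k+r}{k+s}}. \end{aligned} \]
   Context: $\mathbb{Z}^{-}$ denotes the set of negative integers. For complex $z$ not a negative integer, $H_z=\psi(z+1)+\gamma$ ($\psi$ the digamma function, $\gamma$ Euler's constant). Binomial coefficients with complex entries: $\binom{x}{y}=\frac{\Gamma(x+1)}{\Gamma(y+1)\Gamma(x-y+1)}$. *)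

(* Defs.v *)
From Stdlib Require Import Reals Factorial Binomial ClassicalEpsilon.
From Coquelicot Require Import Coquelicot.
Open Scope R_scope.

Definition cexp (z : C) : C :=
  (exp (Re z) * cos (Im z), exp (Re z) * sin (Im z)).

Fixpoint cpoch (z : C) (n : nat) : C :=
  match n with
  | O => z
  | S m => Cmult (cpoch z m) (Cplus z (RtoC (INR (S m))))
  end.

Definition gamma_term (z : C) (n : nat) : C :=
  Cdiv (Cmult (RtoC (INR (fact n))) (cexp (Cmult z (RtoC (ln (INR n)))))) (cpoch z n).

(* Complex Gamma function, defined by Euler's limit formula
   Gamma z = lim_n n! n^z / (z (z+1) ... (z+n))   (z not in {0,-1,-2,...}) *)
Definition CGamma (z : C) : C :=
  epsilon (inhabits (RtoC 0))
    (fun l => filterlim (gamma_term z) eventually (locally l)).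

Definition CGamma' (z : C) : C :=
  epsilon (inhabits (RtoC 0))
    (fun d => is_derive (K := C_AbsRing) (V := C_NormedModule) CGamma z d).

Definition digamma (z : C) : C := Cdiv (CGamma' z) (CGamma z).

Definition euler_gamma : R :=
  real (Lim_seq (fun n => sum_f_R0 (fun k => / INR (S k)) n - ln (INR (S n)))).

(* harmonic number H_z = psi(z+1) + gamma *)
Definition Hc (z : C) : C := Cplus (digamma (Cplus z (RtoC 1))) (RtoC euler_gamma).

Definition Cbinom (x y : C) : C :=
  Cdiv (CGamma (Cplus x (RtoC 1)))
       (Cmult (CGamma (Cplus y (RtoC 1))) (CGamma (Cplus (Cminus x y) (RtoC 1)))).

Definition negint (z : C) : Prop := exists m : nat, z = RtoC (- INR (S m)).

Definition nbinom (n k : nat) : C := RtoC (Binomial.C n k).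

Fixpoint csum (n : nat) (f : nat -> C) : C :=
  match n with
  | O => f O
  | S m => Cplus (csum m f) (f (S m))
  end.

Definition cn (k : nat) : C := RtoC (INR k).
Definition sgn (k : nat) : C := RtoC ((-1) ^ k).

(* Main.v *)
Require Import Defs.
From Stdlib Require Import Reals Lra Lia Psatz Factorial Binomial ClassicalEpsilon.
From Coquelicot Require Import Coquelicot.
Open Scope R_scope.


Definition clim (u : nat -> C) (l : C) :=
  forall eps, 0 < eps -> exists N, forall n, (N <= n)%nat -> Cmod (Cminus (u n) l) < eps.

Lemma clim_filterlim u l : clim u l -> filterlim u eventually (locally l).
Proof.
  intros H. apply filterlim_locally. intros eps.
  destruct (H eps (cond_pos eps)) as [N HN]. exists N. intros n Hn.
  apply C_NormedModule_mixin_compat1. apply HN; auto.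
Qed.

Lemma filterlim_clim u l : filterlim u eventually (locally l) -> clim u l.
Proof.
  intros H eps Heps.
  assert (Hp : 0 < eps / sqrt 2).
  { apply Rdiv_lt_0_compat; auto. apply sqrt_lt_R0; lra. }
  apply filterlim_locally with (eps := mkposreal _ Hp) in H.
  destruct H as [N HN]. exists N. intros n Hn.
  specialize (HN n Hn). apply C_NormedModule_mixin_compat2 in HN. simpl in HN.
  replace (sqrt 2 * (eps / sqrt 2)) with eps in HN. exact HN.
  field. apply Rgt_not_eq, sqrt_lt_R0; lra.
Qed.

Lemma clim_unique u l1 l2 : clim u l1 -> clim u l2 -> l1 = l2.
Proof.
  intros H1 H2. apply clim_filterlim in H1. apply clim_filterlim in H2.
  exact (filterlim_locally_unique _ _ _ H1 H2).
Qed.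

Lemma cauchy_clim (u : nat -> C) :
  (forall eps, 0 < eps -> exists N, forall n m, (N <= n)%nat -> (N <= m)%nat -> Cmod (Cminus (u n) (u m)) < eps) ->
  exists l, clim u l.
Proof.
  intros H.
  assert (Hex : exists y : C, filterlim u eventually (locally y)).
  { apply (filterlim_locally_cauchy (U := C_CompleteNormedModule)). intros eps.
    destruct (H eps (cond_pos eps)) as [N HN]. exists (fun n => (N <= n)%nat). split.
    - exists N. auto.
    - intros a b Ha Hb. apply C_NormedModule_mixin_compat1. apply HN; auto. }
  destruct Hex as [y Hy]. exists y. apply filterlim_clim. exact Hy.
Qed.


Lemma mvt0 (f df : R -> R) b : (forall x, is_derive f x (df x)) ->
  exists c, Rabs c <= Rabs b /\ f b - f 0 = df c * b.
Proof.
  intros Hd. destruct (MVT_gen f 0 b df) as [c [Hc E]].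
  - intros; auto.
  - intros. apply continuity_pt_filterlim. exact (ex_derive_continuous (V:=R_NormedModule) f x (ex_intro _ _ (Hd x))).
  - exists c. split. 2: rewrite E; ring.
    revert Hc. unfold Rmin, Rmax. destruct (Rle_dec 0 b); intros;
    unfold Rabs; repeat destruct Rcase_abs; lra.
Qed.

Lemma sin_abs_le b : Rabs (sin b) <= Rabs b.
Proof.
  destruct (mvt0 sin cos b) as [c [Hc E]]. intros; apply is_derive_sin.
  rewrite sin_0 in E. replace (sin b) with (cos c * b) by lra.
  rewrite Rabs_mult. pose proof (COS_bound c).
  assert (Rabs (cos c) <= 1) by (apply Rabs_le; lra).
  pose proof (Rabs_pos b). nra.
Qed.

Lemma cos_m1_le b : Rabs (cos b - 1) <= b ^ 2.
Proof.
  destruct (mvt0 cos (fun x => - sin x) b) as [c [Hc E]]. intros; apply is_derive_cos.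
  rewrite cos_0 in E. rewrite E, Rabs_mult, Rabs_Ropp.
  pose proof (sin_abs_le c). pose proof (Rabs_pos b). pose proof (Rabs_pos c).
  replace (b^2) with (Rabs b * Rabs b). nra.
  rewrite <- Rabs_mult. rewrite Rabs_right. ring. nra.
Qed.

Lemma sin_m_le b : Rabs (sin b - b) <= Rabs b ^ 3.
Proof.
  destruct (mvt0 (fun x => sin x - x) (fun x => cos x - 1) b) as [c [Hc E]].
  { intros. auto_derive; auto. ring. }
  rewrite sin_0 in E. replace (sin b - b) with ((cos c - 1) * b) by lra.
  rewrite Rabs_mult. pose proof (cos_m1_le c). pose proof (Rabs_pos b). pose proof (Rabs_pos c).
  assert (c ^ 2 <= Rabs b ^ 2). { rewrite <- (pow2_abs c). nra. }
  nra.
Qed.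



Lemma exp_mono x y : x <= y -> exp x <= exp y.
Proof. intros H. destruct (Req_dec x y). subst; lra. apply Rlt_le, exp_increasing. lra. Qed.

Lemma exp_m1_le a : Rabs (exp a - 1) <= Rabs a * exp (Rabs a).
Proof.
  destruct (mvt0 exp exp a) as [c [Hc E]]. intros; apply is_derive_exp.
  rewrite exp_0 in E. rewrite E, Rabs_mult, Rmult_comm.
  rewrite (Rabs_right (exp c)) by (apply Rle_ge, Rlt_le, exp_pos).
  apply Rmult_le_compat_l. apply Rabs_pos. apply exp_mono.
  apply Rle_trans with (Rabs c). apply Rle_abs. auto.
Qed.

Lemma exp_m1a_le a : Rabs (exp a - 1 - a) <= a ^ 2 * exp (Rabs a).
Proof.
  destruct (mvt0 (fun x => exp x - 1 - x) (fun x => exp x - 1) a) as [c [Hc E]].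
  { intros. auto_derive; auto. ring. }
  rewrite exp_0 in E. replace (exp a - 1 - a) with ((exp c - 1) * a) by lra.
  rewrite Rabs_mult. pose proof (exp_m1_le c).
  assert (exp (Rabs c) <= exp (Rabs a)) by (apply exp_mono; auto).
  pose proof (Rabs_pos c). pose proof (Rabs_pos a). pose proof (exp_pos (Rabs c)).
  rewrite <- (pow2_abs a).
  apply Rle_trans with (Rabs c * exp (Rabs c) * Rabs a). nra.
  assert (Rabs c * exp (Rabs c) <= Rabs a * exp (Rabs a)) by (apply Rmult_le_compat; lra).
  nra.
Qed.


Lemma cexp_add u v : cexp (Cplus u v) = Cmult (cexp u) (cexp v).
Proof.
  destruct u as [a b], v as [c d]. unfold cexp, Cplus, Cmult; simpl.
  rewrite exp_plus, cos_plus, sin_plus. f_equal; ring.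
Qed.

Lemma Cmod_cexp w : Cmod (cexp w) = exp (Re w).
Proof.
  destruct w as [a b]. unfold cexp, Cmod, Re, Im; cbn [fst snd].
  replace ((exp a * cos b) ^ 2 + (exp a * sin b) ^ 2) with (exp a ^ 2 * (sin b ^ 2 + cos b ^ 2)) by ring.
  rewrite <- (Rsqr_pow2 (sin b)), <- (Rsqr_pow2 (cos b)), sin2_cos2, Rmult_1_r, <- Rsqr_pow2.
  apply sqrt_Rsqr. apply Rlt_le, exp_pos.
Qed.

Lemma cexp_0 : cexp (RtoC 0) = RtoC 1.
Proof. unfold cexp; simpl. rewrite exp_0, cos_0, sin_0. unfold RtoC. f_equal; ring. Qed.

Lemma cexp_nz w : cexp w <> RtoC 0.
Proof. intros H. pose proof (Cmod_cexp w) as E. rewrite H, Cmod_0 in E.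
  pose proof (exp_pos (Re w)). lra. Qed.

Lemma cexp_R x : cexp (RtoC x) = RtoC (exp x).
Proof. unfold cexp; simpl. rewrite cos_0, sin_0. unfold RtoC. f_equal; ring. Qed.

Lemma Cmod_le_sum (x y : R) : Cmod (x, y) <= Rabs x + Rabs y.
Proof.
  unfold Cmod; cbn [fst snd]. rewrite <- (sqrt_Rsqr (Rabs x + Rabs y)).
  2: pose proof (Rabs_pos x); pose proof (Rabs_pos y); lra.
  apply sqrt_le_1_alt. unfold Rsqr. rewrite <- (pow2_abs x), <- (pow2_abs y).
  pose proof (Rabs_pos x); pose proof (Rabs_pos y); nra.
Qed.

Lemma Re_le_Cmod w : Rabs (fst w) <= Cmod w.
Proof. apply re_le_Cmod. Qed.
Lemma Im_le_Cmod w : Rabs (snd w) <= Cmod w.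
Proof. destruct w as [a b]. unfold Cmod; cbn [fst snd]. rewrite <- sqrt_Rsqr_abs. apply sqrt_le_1_alt.
  unfold Rsqr. nra. Qed.

Lemma Cmod_sq w : Cmod w ^ 2 = fst w ^ 2 + snd w ^ 2.
Proof. apply Cmod2_alt. Qed.

Lemma x_le_exp x : x <= exp x.
Proof. pose proof (exp_ineq1_le x). lra. Qed.

Lemma cexp_bound w : Cmod (Cminus (Cminus (cexp w) (RtoC 1)) w) <= 3 * Cmod w ^ 2 * exp (Cmod w).
Proof.
  pose proof (Re_le_Cmod w) as Ha. pose proof (Im_le_Cmod w) as Hb. pose proof (Cmod_sq w) as Hs.
  pose proof (Cmod_ge_0 w) as H0.
  destruct w as [a b]. cbn [fst snd] in Ha, Hb, Hs. set (m := Cmod (a, b)) in *.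
  unfold cexp, Cminus, Cplus, Copp, RtoC, Re, Im; cbn [fst snd].
  eapply Rle_trans. apply Cmod_le_sum.
  assert (Em : exp (Rabs a) <= exp m) by (apply exp_mono; auto).
  pose proof (exp_pos (Rabs a)). pose proof (exp_pos m).
  assert (R1 : Rabs (exp a * cos b + - (1) + - a) <= m ^ 2 * exp m).
  { replace (exp a * cos b + - (1) + - a) with ((exp a - 1 - a) + exp a * (cos b - 1)) by ring.
    eapply Rle_trans. apply Rabs_triang. rewrite Rabs_mult.
    pose proof (exp_m1a_le a). pose proof (cos_m1_le b).
    assert (exp a <= exp (Rabs a)) by (apply exp_mono, Rle_abs).
    rewrite (Rabs_right (exp a)) by (apply Rle_ge, Rlt_le, exp_pos).
    pose proof (exp_pos a).
    assert (a ^ 2 * exp (Rabs a) <= a^2 * exp m) by (apply Rmult_le_compat_l; nra).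
    assert (exp a * Rabs (cos b - 1) <= exp m * b ^ 2).
    { apply Rmult_le_compat; try lra. apply Rabs_pos. }
    rewrite Hs. nra. }
  assert (R2 : Rabs (exp a * sin b + - (0) + - b) <= 2 * m ^ 2 * exp m).
  { replace (exp a * sin b + - (0) + - b) with ((exp a - 1) * sin b + (sin b - b)) by ring.
    eapply Rle_trans. apply Rabs_triang. rewrite Rabs_mult.
    pose proof (exp_m1_le a) as Hea. pose proof (sin_m_le b). pose proof (sin_abs_le b).
    pose proof (Rabs_pos a). pose proof (Rabs_pos b). pose proof (Rabs_pos (sin b)).
    pose proof (Rabs_pos (exp a - 1)).
    assert (Rabs (exp a - 1) * Rabs (sin b) <= m * exp m * m).
    { apply Rmult_le_compat; try lra. eapply Rle_trans. apply Hea.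
      apply Rmult_le_compat; lra. }
    assert (Rabs b ^ 3 <= m ^ 2 * m).
    { replace (Rabs b ^ 3) with (Rabs b * Rabs b * Rabs b) by ring.
      replace (m ^ 2 * m) with (m * m * m) by ring.
      apply Rmult_le_compat; try nra. }
    pose proof (x_le_exp m). nra. }
  lra.
Qed.


Fixpoint sm (f : nat -> C) (n : nat) : C :=
  match n with O => RtoC 0 | S m => Cplus (sm f m) (f m) end.
Fixpoint pr (f : nat -> C) (n : nat) : C :=
  match n with O => RtoC 1 | S m => Cmult (pr f m) (f m) end.
Fixpoint rsm (f : nat -> R) (n : nat) : R :=
  match n with O => 0 | S m => rsm f m + f m end.

Definition iq (i : nat) : R := / (INR i + 1) ^ 2.

Lemma iq_pos i : 0 < iq i.
Proof. unfold iq. apply Rinv_0_lt_compat. pose proof (pos_INR i). nra. Qed.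

Lemma tail_bound n d : rsm (fun i => iq (n + i)) d <= 2 / (INR n + 1) - 2 / (INR (n + d) + 1).
Proof.
  induction d.
  - simpl. rewrite Nat.add_0_r. lra.
  - simpl rsm. replace (n + S d)%nat with (S (n + d)) by lia.
    rewrite S_INR. assert (iq (n + d) = / (INR (n+d) + 1) ^ 2) by reflexivity.
    set (k := INR (n + d)) in *. assert (0 <= k) by apply pos_INR.
    assert (/ (k + 1) ^ 2 <= 2 / (k + 1) - 2 / (k + 1 + 1)).
    { replace (2 / (k + 1) - 2 / (k + 1 + 1)) with (2 * (k+1) / ((k+1)^2*(k+2))) by (field; lra).
      replace (/ (k+1)^2) with ((k+2)/((k+1)^2*(k+2))) by (field; lra).
      unfold Rdiv. apply Rmult_le_compat_r. left; apply Rinv_0_lt_compat; nra. lra. }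
    unfold k in *. lra.
Qed.

Lemma rsm_iq_le n : rsm iq n <= 2.
Proof.
  pose proof (tail_bound 0 n). simpl in H.
  assert (0 < 2 / (INR n + 1)). { apply Rdiv_lt_0_compat. lra. pose proof (pos_INR n); lra. }
  replace (rsm iq n) with (rsm (fun i => iq i) n) by reflexivity. lra.
Qed.

Lemma rsm_nonneg f n : (forall i, 0 <= f i) -> 0 <= rsm f n.
Proof. intros H; induction n; simpl; auto. lra. specialize (H n); lra. Qed.

Section Prod.
Variable x : nat -> C.
Variable A : R.
Hypothesis HA : 0 <= A.
Hypothesis Hx : forall i, Cmod (x i) <= A * iq i.
Let p n := pr (fun i => Cplus (RtoC 1) (x i)) n.

Lemma prod_bound_aux n : Cmod (p n) <= exp (A * rsm iq n).
Proof.
  induction n.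
  - unfold p; simpl. rewrite Rmult_0_r, exp_0, Cmod_1. lra.
  - unfold p in *. simpl pr. simpl rsm. rewrite Cmod_mult.
    rewrite Rmult_plus_distr_l, exp_plus.
    apply Rmult_le_compat; try apply Cmod_ge_0; auto.
    eapply Rle_trans. apply Cmod_triangle. rewrite Cmod_1.
    eapply Rle_trans. 2: apply exp_ineq1_le. specialize (Hx n). lra.
Qed.

Lemma prod_bound n : Cmod (p n) <= exp (2 * A).
Proof.
  eapply Rle_trans. apply prod_bound_aux. apply exp_mono.
  pose proof (rsm_iq_le n). nra.
Qed.

Lemma prod_diff_aux n d : Cmod (Cminus (p (n + d)%nat) (p n)) <= exp (2 * A) * A * rsm (fun i => iq (n + i)) d.
Proof.
  induction d.
  - rewrite Nat.add_0_r. replace (Cminus (p n) (p n)) with (RtoC 0) by ring.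
    rewrite Cmod_0. simpl. lra.
  - replace (n + S d)%nat with (S (n + d)) by lia. unfold p at 1. simpl pr. fold (p (n + d)%nat).
    replace (Cminus (Cmult (p (n + d)%nat) (Cplus (RtoC 1) (x (n + d)%nat))) (p n))
      with (Cplus (Cminus (p (n + d)%nat) (p n)) (Cmult (p (n + d)%nat) (x (n + d)%nat))) by ring.
    eapply Rle_trans. apply Cmod_triangle. rewrite Cmod_mult. simpl rsm.
    pose proof (prod_bound (n + d)). pose proof (Hx (n + d)%nat).
    pose proof (Cmod_ge_0 (x (n+d)%nat)).
    assert (Cmod (p (n + d)%nat) * Cmod (x (n + d)%nat) <= exp (2 * A) * (A * iq (n + d))).
    { apply Rmult_le_compat; auto. apply Cmod_ge_0. }
    lra.
Qed.

Lemma prod_diff n d : Cmod (Cminus (p (n + d)%nat) (p n)) <= exp (2 * A) * A * (2 / (INR n + 1)).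
Proof.
  eapply Rle_trans. apply prod_diff_aux. pose proof (tail_bound n d).
  assert (0 < 2 / (INR (n + d) + 1)). { apply Rdiv_lt_0_compat. lra. pose proof (pos_INR (n+d)); lra. }
  pose proof (exp_pos (2 * A)).
  apply Rmult_le_compat_l. nra. lra.
Qed.

Lemma prod_m1 n : Cmod (Cminus (p n) (RtoC 1)) <= exp (2 * A) * A * 2.
Proof.
  pose proof (prod_diff 0 n). simpl in H. unfold p in H at 2. simpl in H.
  replace (2 / (0 + 1)) with 2 in H by field. exact H.
Qed.

Lemma prod_conv : exists l, clim p l.
Proof.
  apply cauchy_clim. intros eps Heps.
  set (M := exp (2 * A) * A * 2). assert (0 <= M) by (unfold M; pose proof (exp_pos (2*A)); nra).
  destruct (archimed_cor1 (eps / (2 * (M + 1)))) as [N [HN HN0]].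
  { apply Rdiv_lt_0_compat; lra. }
  exists N. intros n m Hn Hm.
  assert (HNp : 0 < INR N) by (apply lt_0_INR; auto).
  assert (B : forall k, (N <= k)%nat -> Cmod (Cminus (p k) (p N)) <= M / (INR N + 1)).
  { intros k Hk. replace k with (N + (k - N))%nat by lia. eapply Rle_trans. apply prod_diff.
    unfold M, Rdiv. lra. }
  replace (Cminus (p n) (p m)) with (Cplus (Cminus (p n) (p N)) (Copp (Cminus (p m) (p N)))) by ring.
  eapply Rle_lt_trans. apply Cmod_triangle. rewrite Cmod_opp.
  pose proof (B n Hn). pose proof (B m Hm).
  assert (M / (INR N + 1) < eps / 2).
  { apply Rle_lt_trans with (M * / INR N).
    - unfold Rdiv. apply Rmult_le_compat_l; auto. apply Rinv_le_contravar; lra.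
    - apply Rle_lt_trans with ((M+1) * / INR N). apply Rmult_le_compat_r. left; apply Rinv_0_lt_compat; lra. lra.
      apply Rmult_lt_reg_l with (/ (M+1)). apply Rinv_0_lt_compat; lra.
      rewrite <- Rmult_assoc, Rinv_l by lra. replace (/ (M + 1) * (eps / 2)) with (eps / (2 * (M + 1))) by (field; lra). lra. }
  lra.
Qed.
End Prod.


Lemma clim_ext u v l N : (forall n, (N <= n)%nat -> u n = v n) -> clim u l -> clim v l.
Proof.
  intros E H eps Heps. destruct (H eps Heps) as [M HM]. exists (max N M).
  intros n Hn. rewrite <- E by lia. apply HM; lia.
Qed.

Lemma clim_const c : clim (fun _ => c) c.
Proof. intros eps Heps. exists O. intros. replace (Cminus c c) with (RtoC 0) by ring. rewrite Cmod_0; lra. Qed.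

Lemma clim_le u l v B N : clim u l -> (forall n, (N <= n)%nat -> Cmod (Cminus (u n) v) <= B) -> Cmod (Cminus l v) <= B.
Proof.
  intros H Hb. apply Rnot_lt_le. intros Hlt.
  destruct (H (Cmod (Cminus l v) - B)) as [M HM]. lra.
  specialize (HM (max N M) ltac:(lia)). specialize (Hb (max N M) ltac:(lia)).
  pose proof (Cmod_triangle (Cminus l (u (max N M))) (Cminus (u (max N M)) v)).
  replace (Cplus (Cminus l (u (max N M))) (Cminus (u (max N M)) v)) with (Cminus l v) in H0 by ring.
  replace (Cminus l (u (max N M))) with (Copp (Cminus (u (max N M)) l)) in H0 by ring.
  rewrite Cmod_opp in H0. lra.
Qed.

Lemma clim_mult u v a b : clim u a -> clim v b -> clim (fun n => Cmult (u n) (v n)) (Cmult a b).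
Proof.
  intros Hu Hv eps Heps.
  set (K := Cmod a + Cmod b + 1). assert (0 < K) by (unfold K; pose proof (Cmod_ge_0 a); pose proof (Cmod_ge_0 b); lra).
  set (e := Rmin 1 (eps / (4 * K))). assert (0 < e) by (unfold e; apply Rmin_pos; [lra| apply Rdiv_lt_0_compat; lra]).
  assert (e <= 1) by apply Rmin_l. assert (e <= eps / (4 * K)) by apply Rmin_r.
  destruct (Hu e H0) as [N1 HN1]. destruct (Hv e H0) as [N2 HN2].
  exists (max N1 N2). intros n Hn.
  specialize (HN1 n ltac:(lia)). specialize (HN2 n ltac:(lia)).
  replace (Cminus (Cmult (u n) (v n)) (Cmult a b)) with
    (Cplus (Cmult (Cminus (u n) a) (v n)) (Cmult a (Cminus (v n) b))) by ring.
  eapply Rle_lt_trans. apply Cmod_triangle. rewrite !Cmod_mult.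
  assert (Cmod (v n) <= Cmod b + 1).
  { replace (v n) with (Cplus (Cminus (v n) b) b) by ring. eapply Rle_trans. apply Cmod_triangle. lra. }
  pose proof (Cmod_ge_0 (v n)). pose proof (Cmod_ge_0 a). pose proof (Cmod_ge_0 (Cminus (u n) a)).
  pose proof (Cmod_ge_0 (Cminus (v n) b)).
  assert (Cmod (Cminus (u n) a) * Cmod (v n) <= e * K).
  { apply Rmult_le_compat; try lra. unfold K; lra. }
  assert (Cmod a * Cmod (Cminus (v n) b) <= K * e).
  { apply Rmult_le_compat; try lra. unfold K; pose proof (Cmod_ge_0 b); lra. }
  assert (e * K <= eps / 4).
  { apply Rle_trans with (eps / (4 * K) * K). apply Rmult_le_compat_r; lra. right; field; lra. }
  lra.
Qed.

Lemma clim_scal u a c : clim u a -> clim (fun n => Cmult c (u n)) (Cmult c a).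
Proof. intros H. apply clim_mult; auto. apply clim_const. Qed.

Lemma cauchy_clim2 (u : nat -> C) M : 0 <= M ->
  (forall n d, Cmod (Cminus (u (n + d)%nat) (u n)) <= M / (INR n + 1)) -> exists l, clim u l.
Proof.
  intros HM Hd. apply cauchy_clim. intros eps Heps.
  destruct (archimed_cor1 (eps / (2 * (M + 1)))) as [N [HN HN0]].
  { apply Rdiv_lt_0_compat; lra. }
  exists N. intros n m Hn Hm.
  assert (HNp : 0 < INR N) by (apply lt_0_INR; auto).
  assert (B : forall k, (N <= k)%nat -> Cmod (Cminus (u k) (u N)) <= M / (INR N + 1)).
  { intros k Hk. replace k with (N + (k - N))%nat by lia. apply Hd. }
  replace (Cminus (u n) (u m)) with (Cplus (Cminus (u n) (u N)) (Copp (Cminus (u m) (u N)))) by ring.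
  eapply Rle_lt_trans. apply Cmod_triangle. rewrite Cmod_opp.
  pose proof (B n Hn). pose proof (B m Hm).
  assert (M / (INR N + 1) < eps / 2).
  { apply Rle_lt_trans with (M * / INR N).
    - unfold Rdiv. apply Rmult_le_compat_l; auto. apply Rinv_le_contravar; lra.
    - apply Rle_lt_trans with ((M+1) * / INR N). apply Rmult_le_compat_r. left; apply Rinv_0_lt_compat; lra. lra.
      apply Rmult_lt_reg_l with (/ (M+1)). apply Rinv_0_lt_compat; lra.
      rewrite <- Rmult_assoc, Rinv_l by lra. replace (/ (M + 1) * (eps / 2)) with (eps / (2 * (M + 1))) by (field; lra). lra. }
  lra.
Qed.

Lemma clim_rate (u : nat -> C) l M : (forall n, Cmod (Cminus (u n) l) <= M / (INR n + 1)) -> clim u l.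
Proof.
  intros H eps Heps.
  assert (HM : 0 <= M). { specialize (H O). simpl in H. pose proof (Cmod_ge_0 (Cminus (u O) l)).
    replace (M / (0 + 1)) with M in H by field. lra. }
  destruct (archimed_cor1 (eps / (M + 1))) as [N [HN HN0]].
  { apply Rdiv_lt_0_compat; lra. }
  exists N. intros n Hn. eapply Rle_lt_trans. apply H.
  assert (HNp : 0 < INR N) by (apply lt_0_INR; auto).
  assert (INR N <= INR n) by (apply le_INR; auto).
  apply Rle_lt_trans with (M * / INR N).
  - unfold Rdiv. apply Rmult_le_compat_l; auto. apply Rinv_le_contravar; lra.
  - apply Rle_lt_trans with ((M+1) * / INR N). apply Rmult_le_compat_r. left; apply Rinv_0_lt_compat; lra. lra.
    apply Rmult_lt_reg_l with (/ (M+1)). apply Rinv_0_lt_compat; lra.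
    rewrite <- Rmult_assoc, Rinv_l by lra. replace (/ (M + 1) * eps) with (eps / (M + 1)) by (field; lra). lra.
Qed.

Lemma sum_diff_aux (c : nat -> C) K n d : (forall i, Cmod (c i) <= K * iq i) ->
  Cmod (Cminus (sm c (n + d)) (sm c n)) <= K * rsm (fun i => iq (n + i)) d.
Proof.
  intros H. induction d.
  - rewrite Nat.add_0_r. replace (Cminus (sm c n) (sm c n)) with (RtoC 0) by ring. rewrite Cmod_0; simpl; lra.
  - replace (n + S d)%nat with (S (n + d)) by lia. simpl sm. simpl rsm.
    replace (Cminus (Cplus (sm c (n + d)) (c (n + d)%nat)) (sm c n)) with
      (Cplus (Cminus (sm c (n + d)) (sm c n)) (c (n + d)%nat)) by ring.
    eapply Rle_trans. apply Cmod_triangle. specialize (H (n + d)%nat). lra.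
Qed.

Lemma sum_conv (c : nat -> C) K : 0 <= K -> (forall i, Cmod (c i) <= K * iq i) -> exists S, clim (sm c) S.
Proof.
  intros HK H. apply (cauchy_clim2 _ (2 * K)). lra. intros n d.
  eapply Rle_trans. apply (sum_diff_aux c K n d H). pose proof (tail_bound n d).
  assert (0 < 2 / (INR (n + d) + 1)). { apply Rdiv_lt_0_compat. lra. pose proof (pos_INR (n+d)); lra. }
  replace (2 * K / (INR n + 1)) with (K * (2 / (INR n + 1))) by (field; pose proof (pos_INR n); lra).
  apply Rmult_le_compat_l; lra.
Qed.

Section QP.
Variables (x c : nat -> C) (h : C) (K1 K2 : R).
Hypothesis HK1 : 0 <= K1.
Hypothesis HK2 : 0 <= K2.
Hypothesis Hh : Cmod h <= 1.
Hypothesis Hc : forall i, Cmod (c i) <= K2 * iq i.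
Hypothesis Hxc : forall i, Cmod (Cminus (x i) (Cmult h (c i))) <= K1 * Cmod h ^ 2 * iq i.

Lemma QP_x i : Cmod (x i) <= ((K1 + K2) * Cmod h) * iq i.
Proof.
  replace (x i) with (Cplus (Cminus (x i) (Cmult h (c i))) (Cmult h (c i))) by ring.
  eapply Rle_trans. apply Cmod_triangle. rewrite Cmod_mult.
  pose proof (Hxc i). pose proof (Hc i). pose proof (Cmod_ge_0 h). pose proof (iq_pos i).
  assert (Cmod h * Cmod (c i) <= Cmod h * (K2 * iq i)) by (apply Rmult_le_compat_l; auto).
  assert (K1 * Cmod h ^ 2 * iq i <= K1 * Cmod h * iq i).
  { apply Rmult_le_compat_r. lra. apply Rmult_le_compat_l. auto. simpl. nra. }
  nra.
Qed.

Definition QC0 := exp (2 * (K1 + K2)) * (K1 + K2) * 2.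

Lemma QP_m1 n : Cmod (Cminus (pr (fun i => Cplus (RtoC 1) (x i)) n) (RtoC 1)) <= QC0 * Cmod h.
Proof.
  pose proof (Cmod_ge_0 h).
  eapply Rle_trans. apply (prod_m1 x ((K1 + K2) * Cmod h)). nra. apply QP_x.
  unfold QC0. assert (exp (2 * ((K1 + K2) * Cmod h)) <= exp (2 * (K1 + K2))) by (apply exp_mono; nra).
  pose proof (exp_pos (2 * ((K1 + K2) * Cmod h))).
  assert (0 <= (K1 + K2) * Cmod h) by nra.
  replace (exp (2 * (K1 + K2)) * (K1 + K2) * 2 * Cmod h) with (exp (2 * (K1 + K2)) * ((K1 + K2) * Cmod h) * 2) by ring.
  apply Rmult_le_compat_r. lra. apply Rmult_le_compat_r; lra.
Qed.

Lemma QP_E_aux n : Cmod (Cminus (Cminus (pr (fun i => Cplus (RtoC 1) (x i)) n) (RtoC 1)) (Cmult h (sm c n)))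
   <= (QC0 * (K1 + K2) + K1) * Cmod h ^ 2 * rsm iq n.
Proof.
  induction n.
  - simpl. replace (Cminus (Cminus (RtoC 1) (RtoC 1)) (Cmult h (RtoC 0))) with (RtoC 0) by ring.
    rewrite Cmod_0. lra.
  - simpl pr. simpl sm. simpl rsm.
    set (P := pr (fun i => Cplus (RtoC 1) (x i)) n) in *.
    replace (Cminus (Cminus (Cmult P (Cplus (RtoC 1) (x n))) (RtoC 1)) (Cmult h (Cplus (sm c n) (c n))))
      with (Cplus (Cminus (Cminus P (RtoC 1)) (Cmult h (sm c n)))
             (Cplus (Cmult (Cminus P (RtoC 1)) (x n)) (Cminus (x n) (Cmult h (c n))))) by ring.
    eapply Rle_trans. apply Cmod_triangle. eapply Rle_trans. apply Rplus_le_compat_l. apply Cmod_triangle.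
    rewrite Cmod_mult. pose proof (QP_m1 n) as H1. fold P in H1. pose proof (QP_x n) as H2.
    pose proof (Hxc n) as H3. pose proof (Cmod_ge_0 h). pose proof (iq_pos n).
    pose proof (Cmod_ge_0 (Cminus P (RtoC 1))). pose proof (Cmod_ge_0 (x n)).
    assert (Cmod (Cminus P (RtoC 1)) * Cmod (x n) <= (QC0 * Cmod h) * ((K1 + K2) * Cmod h * iq n)).
    { apply Rmult_le_compat; auto. }
    replace ((QC0 * (K1 + K2) + K1) * Cmod h ^ 2 * (rsm iq n + iq n)) with
      ((QC0 * (K1 + K2) + K1) * Cmod h ^ 2 * rsm iq n + (QC0 * Cmod h) * ((K1 + K2) * Cmod h * iq n) + K1 * Cmod h ^ 2 * iq n) by ring.
    lra.
Qed.

Lemma QP_E n : Cmod (Cminus (Cminus (pr (fun i => Cplus (RtoC 1) (x i)) n) (RtoC 1)) (Cmult h (sm c n)))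
   <= 2 * (QC0 * (K1 + K2) + K1) * Cmod h ^ 2.
Proof.
  eapply Rle_trans. apply QP_E_aux. pose proof (rsm_iq_le n).
  assert (0 <= QC0) by (unfold QC0; pose proof (exp_pos (2 * (K1 + K2))); nra).
  assert (0 <= (QC0 * (K1 + K2) + K1) * Cmod h ^ 2).
  { apply Rmult_le_pos. nra. pose proof (Cmod_ge_0 h); nra. }
  nra.
Qed.
End QP.

Lemma clim_plus u v a b : clim u a -> clim v b -> clim (fun n => Cplus (u n) (v n)) (Cplus a b).
Proof.
  intros Hu Hv eps Heps. destruct (Hu (eps/2)) as [N1 H1]. lra. destruct (Hv (eps/2)) as [N2 H2]. lra.
  exists (max N1 N2). intros n Hn. specialize (H1 n ltac:(lia)). specialize (H2 n ltac:(lia)).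
  replace (Cminus (Cplus (u n) (v n)) (Cplus a b)) with (Cplus (Cminus (u n) a) (Cminus (v n) b)) by ring.
  eapply Rle_lt_trans. apply Cmod_triangle. lra.
Qed.

Lemma QD (f : C -> C) x l : (exists d K, 0 < d /\ forall h, Cmod h < d -> Cmod (Cminus (Cminus (f (Cplus x h)) (f x)) (Cmult h l)) <= K * Cmod h ^ 2) ->
  is_derive f x l.
Proof.
  intros [d [K [Hd H]]]. split. apply is_linear_scal_l.
  intros x0 Hx0. apply (is_filter_lim_locally_unique (K:=C_AbsRing) (V:=AbsRing_NormedModule C_AbsRing)) in Hx0. subst x0.
  intros eps. set (K' := Rabs K + 1).
  assert (HK' : 0 < K') by (unfold K'; pose proof (Rabs_pos K); lra).
  set (r := Rmin d (eps / K')). assert (Hr : 0 < r) by (apply Rmin_pos; auto; apply Rdiv_lt_0_compat; [apply cond_pos|auto]).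
  assert (Hs : 0 < sqrt 2) by (apply sqrt_lt_R0; lra).
  exists (mkposreal r Hr). intros y Hy.
  assert (Hy' : Cmod (Cminus y x) < r) by exact Hy. clear Hy. rename Hy' into Hy.
  change (Cmod (Cminus (Cminus (f y) (f x)) (Cmult (Cminus y x) l)) <= eps * Cmod (Cminus y x)).
  set (h := Cminus y x) in *. replace y with (Cplus x h) by (unfold h; ring).
  assert (Cmod h < d) by (eapply Rlt_le_trans; [apply Hy| apply Rmin_l]).
  assert (Cmod h <= eps / K') by (left; eapply Rlt_le_trans; [apply Hy| apply Rmin_r]).
  eapply Rle_trans. apply H; auto.
  pose proof (Cmod_ge_0 h). assert (K <= K') by (unfold K'; pose proof (Rle_abs K); lra).
  assert (K' * Cmod h <= eps).
  { apply Rmult_le_reg_l with (/ K'). apply Rinv_0_lt_compat; auto.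
    rewrite <- Rmult_assoc, Rinv_l by lra. replace (/ K' * eps) with (eps / K') by (unfold Rdiv; ring). lra. }
  replace (K * Cmod h ^ 2) with ((K * Cmod h) * Cmod h) by ring.
  apply Rmult_le_compat_r. auto. nra.
Qed.


Definition nonpole (z : C) := forall j : nat, Cplus z (RtoC (INR j)) <> RtoC 0.

Lemma Cmod_INR j : Cmod (RtoC (INR j)) = INR j.
Proof. rewrite Cmod_R. apply Rabs_right. apply Rle_ge, pos_INR. Qed.

Lemma Cmod_rev_tri a b : Cmod a - Cmod b <= Cmod (Cplus a b).
Proof.
  pose proof (Cmod_triangle (Cplus a b) (Copp b)). rewrite Cmod_opp in H.
  replace (Cplus (Cplus a b) (Copp b)) with a in H by ring. lra.
Qed.

Lemma nonpole_fin z : nonpole z -> forall N, exists m, 0 < m /\ forall j, (j < N)%nat -> m <= Cmod (Cplus z (RtoC (INR j))).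
Proof.
  intros Hz N. induction N.
  - exists 1. split. lra. intros; lia.
  - destruct IHN as [m [Hm H]].
    assert (0 < Cmod (Cplus z (RtoC (INR N)))) by (apply Cmod_gt_0, Hz).
    exists (Rmin m (Cmod (Cplus z (RtoC (INR N))))). split. apply Rmin_pos; auto.
    intros j Hj. destruct (Nat.eq_dec j N). subst. apply Rmin_r.
    eapply Rle_trans. apply Rmin_l. apply H; lia.
Qed.

Lemma nonpole_bound z : nonpole z -> exists m, 0 < m /\ forall j, m <= Cmod (Cplus z (RtoC (INR j))).
Proof.
  intros Hz. destruct (INR_unbounded (Cmod z + 1)) as [N HN].
  destruct (nonpole_fin z Hz N) as [m [Hm H]].
  exists (Rmin m 1). split. apply Rmin_pos; lra.
  intros j. destruct (Nat.lt_ge_cases j N) as [Hl|Hl]. eapply Rle_trans. apply Rmin_l. auto.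
  eapply Rle_trans. apply Rmin_r. pose proof (Cmod_rev_tri (RtoC (INR j)) z) as H0.
  rewrite Cmod_INR in H0. assert (INR N <= INR j) by (apply le_INR; lia).
  replace (Cplus z (RtoC (INR j))) with (Cplus (RtoC (INR j)) z) by ring. lra.
Qed.

Lemma inv_bound z m j : 0 < m -> (forall j, m <= Cmod (Cplus z (RtoC (INR j)))) ->
  INR j <= (1 + Cmod z / m) * Cmod (Cplus z (RtoC (INR j))).
Proof.
  intros Hm H. pose proof (H j). pose proof (Cmod_triangle (Cplus z (RtoC (INR j))) (Copp z)).
  replace (Cplus (Cplus z (RtoC (INR j))) (Copp z)) with (RtoC (INR j)) in H1 by ring.
  rewrite Cmod_INR, Cmod_opp in H1. pose proof (Cmod_ge_0 z).
  assert (Cmod z <= Cmod z / m * Cmod (Cplus z (RtoC (INR j)))).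
  { replace (Cmod z) with (Cmod z / m * m) at 1 by (field; lra). apply Rmult_le_compat_l; auto.
    apply Rdiv_le_0_compat; lra. }
  lra.
Qed.

Definition ell (i : nat) : R := ln (INR (S (S i))) - ln (INR (S i)).

Lemma ln_le_x y : 0 < 1 + y -> ln (1 + y) <= y.
Proof. intros H. rewrite <- (ln_exp y) at 2. apply ln_le; auto. apply exp_ineq1_le. Qed.

Lemma ell_bounds i : 0 <= ell i /\ ell i <= / INR (S i) /\ / INR (S i) - ell i <= iq i.
Proof.
  unfold ell. set (j := INR (S i)). assert (Hj : 1 <= j) by (unfold j; rewrite S_INR; pose proof (pos_INR i); lra).
  replace (INR (S (S i))) with (j + 1) by (unfold j; rewrite (S_INR (S i)); auto).
  assert (E1 : ln (j + 1) - ln j = ln (1 + / j)).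
  { rewrite <- ln_div by lra. f_equal. field. lra. }
  assert (E2 : ln (j + 1) - ln j = - ln (1 + - / (j + 1))).
  { rewrite <- ln_div by lra. rewrite <- ln_Rinv. f_equal. field. lra.
    replace (1 + - / (j + 1)) with (j / (j+1)) by (field; lra). apply Rdiv_lt_0_compat; lra. }
  assert (U : ln (1 + / j) <= / j). { apply ln_le_x. pose proof (Rinv_0_lt_compat j); lra. }
  assert (L : ln (1 + - / (j + 1)) <= - / (j + 1)).
  { apply ln_le_x. assert (/ (j + 1) < 1). { rewrite <- Rinv_1. apply Rinv_lt_contravar; lra. } lra. }
  assert (iq i = / j ^ 2) by (unfold iq, j; rewrite S_INR; auto).
  assert (0 < / (j + 1)) by (apply Rinv_0_lt_compat; lra).
  split; [|split]; try lra.
  assert (/ j - / (j + 1) <= / j ^ 2).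
  { replace (/ j - / (j + 1)) with (/ (j * (j + 1))) by (field; lra).
    apply Rinv_le_contravar. nra. nra. }
  lra.
Qed.

Lemma div_le N D a b : 0 <= N -> N <= a -> 0 < b -> b <= D -> N / D <= a / b.
Proof.
  intros. unfold Rdiv. apply Rmult_le_compat; try lra.
  left; apply Rinv_0_lt_compat; lra. apply Rinv_le_contravar; lra.
Qed.

Definition af (z : C) (i : nat) : C :=
  Cmult (cexp (Cmult z (RtoC (ell i)))) (Cdiv (RtoC (INR (S i))) (Cplus z (RtoC (INR (S i))))).
Definition arf (z : C) (i : nat) : C :=
  Cmult (cexp (Copp (Cmult z (RtoC (ell i))))) (Cdiv (Cplus z (RtoC (INR (S i)))) (RtoC (INR (S i)))).

Lemma INR_S_pos i : 1 <= INR (S i).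
Proof. rewrite S_INR. pose proof (pos_INR i). lra. Qed.

Lemma RtoC_nz x : x <> 0 -> RtoC x <> RtoC 0.
Proof. intros H E. apply H. injection E. auto. Qed.

Lemma Cmod_w z i : Cmod (Cmult z (RtoC (ell i))) <= Cmod z * / INR (S i).
Proof.
  rewrite Cmod_mult, Cmod_R. destruct (ell_bounds i) as [H1 [H2 H3]].
  rewrite Rabs_right by lra. apply Rmult_le_compat_l. apply Cmod_ge_0. auto.
Qed.

Section Factors.
Variable z : C.
Variable m : R.
Hypothesis Hm : 0 < m.
Hypothesis Hb : forall j, m <= Cmod (Cplus z (RtoC (INR j))).
Let rho := 1 + Cmod z / m.

Lemma rho_ge1 : 1 <= rho.
Proof. unfold rho. pose proof (Cmod_ge_0 z). assert (0 <= Cmod z / m) by (apply Rdiv_le_0_compat; lra). lra. Qed.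

Lemma q_lower i : INR (S i) / rho <= Cmod (Cplus z (RtoC (INR (S i)))).
Proof.
  pose proof (inv_bound z m (S i) Hm Hb). fold rho in H. pose proof rho_ge1.
  apply Rmult_le_reg_r with rho. lra. unfold Rdiv. rewrite Rmult_assoc, Rinv_l by lra. lra.
Qed.

Lemma q_nz i : Cplus z (RtoC (INR (S i))) <> RtoC 0.
Proof. intros E. pose proof (Hb (S i)). rewrite E, Cmod_0 in H. lra. Qed.

Definition Ka := (3 * Cmod z ^ 2 * exp (Cmod z) + Cmod z) * rho.

Lemma af_bound i : Cmod (Cminus (af z i) (RtoC 1)) <= Ka * iq i.
Proof.
  set (j := INR (S i)). set (q := Cplus z (RtoC j)). set (w := Cmult z (RtoC (ell i))).
  assert (Hj : 1 <= j) by apply INR_S_pos.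
  assert (Hq : q <> RtoC 0) by apply q_nz.
  assert (Hjn : RtoC j <> RtoC 0) by (apply RtoC_nz; lra).
  assert (E : Cminus (af z i) (RtoC 1) =
    Cdiv (Cplus (Cmult (RtoC j) (Cminus (Cminus (cexp w) (RtoC 1)) w))
                (Cmult z (Cminus (Cmult (RtoC j) (RtoC (ell i))) (RtoC 1)))) q).
  { unfold af. fold j. unfold q, w. field. auto. }
  rewrite E, Cmod_div by auto.
  destruct (ell_bounds i) as [L1 [L2 L3]]. fold j in L2, L3.
  assert (Hiq : iq i = / j ^ 2) by (unfold iq, j; rewrite S_INR; reflexivity).
  pose proof (Cmod_w z i) as Hw. fold w j in Hw.
  pose proof (cexp_bound w) as Hc.
  assert (Hwz : Cmod w <= Cmod z).
  { eapply Rle_trans. apply Hw. pose proof (Cmod_ge_0 z). assert (/ j <= 1) by (rewrite <- Rinv_1; apply Rinv_le_contravar; lra). nra. }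
  assert (Hw2 : Cmod w ^ 2 <= Cmod z ^ 2 / j ^ 2).
  { pose proof (Cmod_ge_0 w). replace (Cmod z ^ 2 / j ^ 2) with ((Cmod z * / j) ^ 2) by (field; lra).
    apply pow_incr. lra. }
  assert (HX : Cmod (Cminus (Cminus (cexp w) (RtoC 1)) w) <= 3 * (Cmod z ^ 2 / j ^ 2) * exp (Cmod z)).
  { eapply Rle_trans. apply Hc. pose proof (exp_pos (Cmod w)). pose proof (Cmod_ge_0 w).
    apply Rmult_le_compat. nra. apply Rlt_le, exp_pos. nra. apply exp_mono; auto. }
  assert (HY : Cmod (Cminus (Cmult (RtoC j) (RtoC (ell i))) (RtoC 1)) <= / j).
  { rewrite <- RtoC_mult, <- RtoC_minus, Cmod_R.
    rewrite Rabs_left1.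
    2: { assert (j * ell i <= j * / j) by (apply Rmult_le_compat_l; lra). rewrite Rinv_r in H by lra. lra. }
    assert (j * (/ j - ell i) <= j * iq i) by (apply Rmult_le_compat_l; lra).
    rewrite Hiq in H. replace (j * / j ^ 2) with (/ j) in H by (field; lra).
    replace (- (j * ell i - 1)) with (j * (/ j - ell i)) by (field; lra). lra. }
  set (T := 3 * Cmod z ^ 2 * exp (Cmod z) + Cmod z).
  assert (HN : Cmod (Cplus (Cmult (RtoC j) (Cminus (Cminus (cexp w) (RtoC 1)) w))
                (Cmult z (Cminus (Cmult (RtoC j) (RtoC (ell i))) (RtoC 1)))) <= T / j).
  { eapply Rle_trans. apply Cmod_triangle. rewrite !Cmod_mult, Cmod_R, Rabs_right by lra.
    pose proof (Cmod_ge_0 z). pose proof (Cmod_ge_0 (Cminus (Cminus (cexp w) (RtoC 1)) w)).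
    pose proof (Cmod_ge_0 (Cminus (Cmult (RtoC j) (RtoC (ell i))) (RtoC 1))).
    assert (j * Cmod (Cminus (Cminus (cexp w) (RtoC 1)) w) <= j * (3 * (Cmod z ^ 2 / j ^ 2) * exp (Cmod z))) by (apply Rmult_le_compat_l; lra).
    assert (Cmod z * Cmod (Cminus (Cmult (RtoC j) (RtoC (ell i))) (RtoC 1)) <= Cmod z * / j) by (apply Rmult_le_compat_l; lra).
    replace (T / j) with (j * (3 * (Cmod z ^ 2 / j ^ 2) * exp (Cmod z)) + Cmod z * / j) by (unfold T; field; lra).
    lra. }
  eapply Rle_trans. apply (div_le _ _ (T / j) (j / rho)).
  apply Cmod_ge_0. auto. apply Rdiv_lt_0_compat. lra. pose proof rho_ge1; lra. apply q_lower.
  right. unfold Ka. fold T. rewrite Hiq. field. split. lra. pose proof rho_ge1; lra.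
Qed.

Definition Kar := 3 * Cmod z ^ 2 * exp (Cmod z) + Cmod z ^ 2 + 3 * Cmod z ^ 3 * exp (Cmod z) + Cmod z.

Lemma af_arf i : Cmult (af z i) (arf z i) = RtoC 1.
Proof.
  unfold af, arf. assert (Hq := q_nz i). assert (RtoC (INR (S i)) <> RtoC 0) by (apply RtoC_nz; pose proof (INR_S_pos i); lra).
  replace (Cmult (Cmult (cexp (Cmult z (RtoC (ell i)))) (Cdiv (RtoC (INR (S i))) (Cplus z (RtoC (INR (S i))))))
    (Cmult (cexp (Copp (Cmult z (RtoC (ell i))))) (Cdiv (Cplus z (RtoC (INR (S i)))) (RtoC (INR (S i))))))
   with (Cmult (Cmult (cexp (Cmult z (RtoC (ell i)))) (cexp (Copp (Cmult z (RtoC (ell i))))))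
      (Cmult (Cdiv (RtoC (INR (S i))) (Cplus z (RtoC (INR (S i))))) (Cdiv (Cplus z (RtoC (INR (S i)))) (RtoC (INR (S i)))))) by ring.
  rewrite <- cexp_add. replace (Cplus (Cmult z (RtoC (ell i))) (Copp (Cmult z (RtoC (ell i))))) with (RtoC 0) by ring.
  rewrite cexp_0. field. auto.
Qed.

Lemma arf_bound i : Cmod (Cminus (arf z i) (RtoC 1)) <= Kar * iq i.
Proof.
  set (j := INR (S i)). set (w := Cmult z (RtoC (ell i))).
  assert (Hj : 1 <= j) by apply INR_S_pos.
  assert (Hjn : RtoC j <> RtoC 0) by (apply RtoC_nz; lra).
  assert (E : Cminus (arf z i) (RtoC 1) =
    Cdiv (Cplus (Cplus (Cmult (RtoC j) (Cminus (Cminus (cexp (Copp w)) (RtoC 1)) (Copp w)))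
                (Cmult z (Cminus (cexp (Copp w)) (RtoC 1))))
                (Copp (Cmult z (Cminus (Cmult (RtoC j) (RtoC (ell i))) (RtoC 1))))) (RtoC j)).
  { unfold arf. fold j. unfold w. field. auto. }
  rewrite E, Cmod_div by auto. rewrite Cmod_R, (Rabs_right j) by lra.
  destruct (ell_bounds i) as [L1 [L2 L3]]. fold j in L2, L3.
  assert (Hiq : iq i = / j ^ 2) by (unfold iq, j; rewrite S_INR; reflexivity).
  pose proof (Cmod_w z i) as Hw. fold w j in Hw.
  pose proof (cexp_bound (Copp w)) as Hc. rewrite Cmod_opp in Hc.
  assert (Hwz : Cmod w <= Cmod z).
  { eapply Rle_trans. apply Hw. pose proof (Cmod_ge_0 z). assert (/ j <= 1) by (rewrite <- Rinv_1; apply Rinv_le_contravar; lra). nra. }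
  assert (Hw2 : Cmod w ^ 2 <= Cmod z ^ 2 / j ^ 2).
  { pose proof (Cmod_ge_0 w). replace (Cmod z ^ 2 / j ^ 2) with ((Cmod z * / j) ^ 2) by (field; lra).
    apply pow_incr. lra. }
  assert (HX : Cmod (Cminus (Cminus (cexp (Copp w)) (RtoC 1)) (Copp w)) <= 3 * (Cmod z ^ 2 / j ^ 2) * exp (Cmod z)).
  { eapply Rle_trans. apply Hc. pose proof (exp_pos (Cmod w)). pose proof (Cmod_ge_0 w).
    apply Rmult_le_compat. nra. apply Rlt_le, exp_pos. nra. apply exp_mono; auto. }
  assert (HZ : Cmod (Cminus (cexp (Copp w)) (RtoC 1)) <= Cmod z / j + 3 * (Cmod z ^ 2 / j ^ 2) * exp (Cmod z)).
  { replace (Cminus (cexp (Copp w)) (RtoC 1)) with (Cplus (Cminus (Cminus (cexp (Copp w)) (RtoC 1)) (Copp w)) (Copp w)) by ring.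
    eapply Rle_trans. apply Cmod_triangle. rewrite Cmod_opp. unfold Rdiv. lra. }
  assert (HY : Cmod (Cminus (Cmult (RtoC j) (RtoC (ell i))) (RtoC 1)) <= / j).
  { rewrite <- RtoC_mult, <- RtoC_minus, Cmod_R.
    rewrite Rabs_left1.
    2: { assert (j * ell i <= j * / j) by (apply Rmult_le_compat_l; lra). rewrite Rinv_r in H by lra. lra. }
    assert (j * (/ j - ell i) <= j * iq i) by (apply Rmult_le_compat_l; lra).
    rewrite Hiq in H. replace (j * / j ^ 2) with (/ j) in H by (field; lra).
    replace (- (j * ell i - 1)) with (j * (/ j - ell i)) by (field; lra). lra. }
  pose proof (Cmod_ge_0 z). pose proof (Cmod_ge_0 (Cminus (Cminus (cexp (Copp w)) (RtoC 1)) (Copp w))).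
  pose proof (Cmod_ge_0 (Cminus (cexp (Copp w)) (RtoC 1))).
  pose proof (Cmod_ge_0 (Cminus (Cmult (RtoC j) (RtoC (ell i))) (RtoC 1))).
  assert (HN : Cmod (Cplus (Cplus (Cmult (RtoC j) (Cminus (Cminus (cexp (Copp w)) (RtoC 1)) (Copp w)))
                (Cmult z (Cminus (cexp (Copp w)) (RtoC 1))))
                (Copp (Cmult z (Cminus (Cmult (RtoC j) (RtoC (ell i))) (RtoC 1))))) <= Kar / j).
  { eapply Rle_trans. apply Cmod_triangle. rewrite Cmod_opp.
    eapply Rle_trans. apply Rplus_le_compat_r. apply Cmod_triangle.
    rewrite !Cmod_mult, Cmod_R, Rabs_right by lra.
    assert (j * Cmod (Cminus (Cminus (cexp (Copp w)) (RtoC 1)) (Copp w)) <= j * (3 * (Cmod z ^ 2 / j ^ 2) * exp (Cmod z))) by (apply Rmult_le_compat_l; lra).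
    assert (Cmod z * Cmod (Cminus (cexp (Copp w)) (RtoC 1)) <= Cmod z * (Cmod z / j + 3 * (Cmod z ^ 2 / j ^ 2) * exp (Cmod z))) by (apply Rmult_le_compat_l; lra).
    assert (Cmod z * Cmod (Cminus (Cmult (RtoC j) (RtoC (ell i))) (RtoC 1)) <= Cmod z * / j) by (apply Rmult_le_compat_l; lra).
    assert (Cmod z * (3 * (Cmod z ^ 2 / j ^ 2) * exp (Cmod z)) <= 3 * Cmod z ^ 3 * exp (Cmod z) / j).
    { replace (Cmod z * (3 * (Cmod z ^ 2 / j ^ 2) * exp (Cmod z))) with ((3 * Cmod z ^ 3 * exp (Cmod z) / j) * / j) by (field; lra).
      assert (/ j <= 1) by (rewrite <- Rinv_1; apply Rinv_le_contravar; lra).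
      assert (0 <= 3 * Cmod z ^ 3 * exp (Cmod z) / j).
      { apply Rdiv_le_0_compat. pose proof (exp_pos (Cmod z)). pose proof (pow_le (Cmod z) 3 H). nra. lra. }
      nra. }
    replace (Kar / j) with (j * (3 * (Cmod z ^ 2 / j ^ 2) * exp (Cmod z)) + Cmod z * (Cmod z / j) + 3 * Cmod z ^ 3 * exp (Cmod z) / j + Cmod z * / j) by (unfold Kar; field; lra).
    lra. }
  eapply Rle_trans. apply (div_le _ _ (Kar / j) j). apply Cmod_ge_0. auto. lra. lra.
  right. rewrite Hiq. field. lra.
Qed.
End Factors.

Definition bf (z h : C) (i : nat) : C :=
  Cmult (cexp (Cmult h (RtoC (ell i)))) (Cdiv (Cplus z (RtoC (INR (S i)))) (Cplus (Cplus z h) (RtoC (INR (S i))))).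
Definition cf (z : C) (i : nat) : C := Cminus (RtoC (ell i)) (Cinv (Cplus z (RtoC (INR (S i))))).

Lemma af_shift z h i : Cplus z (RtoC (INR (S i))) <> RtoC 0 -> Cplus (Cplus z h) (RtoC (INR (S i))) <> RtoC 0 ->
  af (Cplus z h) i = Cmult (af z i) (bf z h i).
Proof.
  intros H1 H2. unfold af, bf.
  replace (Cmult (Cplus z h) (RtoC (ell i))) with (Cplus (Cmult z (RtoC (ell i))) (Cmult h (RtoC (ell i)))) by ring.
  rewrite cexp_add. field. auto.
Qed.

Section BFactors.
Variable z : C.
Variable m : R.
Hypothesis Hm : 0 < m.
Hypothesis Hb : forall j, m <= Cmod (Cplus z (RtoC (INR j))).
Let rho := 1 + Cmod z / m.

Definition K1b := 2 * (3 * exp 1 + rho ^ 2 + rho).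
Definition K2b := 1 + Cmod z * rho.

Lemma cf_bound i : Cmod (cf z i) <= K2b * iq i.
Proof.
  set (j := INR (S i)). set (q := Cplus z (RtoC j)).
  assert (Hj : 1 <= j) by apply INR_S_pos.
  assert (Hq : q <> RtoC 0) by apply (q_nz z m Hm Hb).
  assert (Hjn : RtoC j <> RtoC 0) by (apply RtoC_nz; lra).
  destruct (ell_bounds i) as [L1 [L2 L3]]. fold j in L2, L3.
  assert (Hiq : iq i = / j ^ 2) by (unfold iq, j; rewrite S_INR; reflexivity).
  assert (E : cf z i = Cplus (RtoC (ell i - / j)) (Cdiv z (Cmult (RtoC j) q))).
  { unfold cf. fold j q. rewrite RtoC_minus, RtoC_inv by lra. unfold q. field. split; auto. }
  rewrite E. eapply Rle_trans. apply Cmod_triangle. rewrite Cmod_R, Cmod_div, Cmod_mult, Cmod_R, (Rabs_right j) by (auto using Cmult_neq_0; lra).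
  rewrite Rabs_left1 by lra.
  pose proof (q_lower z m Hm Hb i) as Hql. fold j q rho in Hql.
  assert (Hr := rho_ge1 z m Hm). fold rho in Hr.
  assert (Cmod z / (j * Cmod q) <= Cmod z * rho * iq i).
  { rewrite Hiq. eapply Rle_trans. apply (div_le (Cmod z) (j * Cmod q) (Cmod z) (j * (j / rho))).
    - apply Cmod_ge_0.
    - lra.
    - apply Rmult_lt_0_compat. lra. apply Rdiv_lt_0_compat; lra.
    - apply Rmult_le_compat_l; lra.
    - right. field. lra. }
  unfold K2b. fold rho. lra.
Qed.

Lemma bf_quad h i : Cmod h <= 1 -> Cmod h <= m / 2 ->
  Cmod (Cminus (Cminus (bf z h i) (RtoC 1)) (Cmult h (cf z i))) <= K1b * Cmod h ^ 2 * iq i.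
Proof.
  intros Hh1 Hh2.
  set (j := INR (S i)). set (q := Cplus z (RtoC j)). set (v := Cdiv h q).
  assert (Hj : 1 <= j) by apply INR_S_pos.
  assert (Hq : q <> RtoC 0) by apply (q_nz z m Hm Hb).
  assert (Hqm : m <= Cmod q) by apply Hb.
  assert (Hv : Cmod v <= / 2).
  { unfold v. rewrite Cmod_div by auto. apply Rle_trans with ((m/2) / m).
    apply div_le; auto. apply Cmod_ge_0. right; field; lra. }
  assert (Hv1 : Cmod (Cplus (RtoC 1) v) >= / 2).
  { pose proof (Cmod_rev_tri (RtoC 1) v). rewrite Cmod_1 in H.
    pose proof (Cmod_triangle (Cplus (RtoC 1) v) (Copp v)). rewrite Cmod_opp in H0.
    replace (Cplus (Cplus (RtoC 1) v) (Copp v)) with (RtoC 1) in H0 by ring. rewrite Cmod_1 in H0. lra. }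
  assert (Hv1n : Cplus (RtoC 1) v <> RtoC 0).
  { intros E. rewrite E, Cmod_0 in Hv1. lra. }
  assert (Hqh : Cplus (Cplus z h) (RtoC j) <> RtoC 0).
  { intros E. apply Hv1n. unfold v. replace (Cplus (RtoC 1) (Cdiv h q)) with (Cdiv (Cplus (Cplus z h) (RtoC j)) q).
    rewrite E. field. auto. unfold q. field. auto. }
  set (u := Cmult h (RtoC (ell i))).
  assert (E : Cminus (Cminus (bf z h i) (RtoC 1)) (Cmult h (cf z i)) =
     Cdiv (Cplus (Cminus (Cminus (cexp u) (RtoC 1)) u) (Cminus (Cmult v v) (Cmult u v))) (Cplus (RtoC 1) v)).
  { unfold bf, cf. fold j. unfold v, u, q. unfold v, q in Hv1n. unfold q in Hq. field. repeat split; auto. replace (Cplus (Cplus z (RtoC j)) h) with (Cplus (Cplus z h) (RtoC j)) by ring. auto. }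
  rewrite E, Cmod_div by auto.
  destruct (ell_bounds i) as [L1 [L2 L3]]. fold j in L2, L3.
  assert (Hiq : iq i = / j ^ 2) by (unfold iq, j; rewrite S_INR; reflexivity).
  pose proof (Cmod_ge_0 h) as Hh0.
  assert (Hu : Cmod u <= Cmod h * / j).
  { unfold u. rewrite Cmod_mult, Cmod_R, Rabs_right by lra. apply Rmult_le_compat_l; lra. }
  assert (Hj1 : / j <= 1) by (rewrite <- Rinv_1; apply Rinv_le_contravar; lra).
  assert (Hu1 : Cmod u <= 1). { eapply Rle_trans. apply Hu. pose proof (Rinv_0_lt_compat j). nra. }
  pose proof (q_lower z m Hm Hb i) as Hql. fold j q rho in Hql.
  assert (Hr := rho_ge1 z m Hm). fold rho in Hr.
  assert (Hvr : Cmod v <= Cmod h * rho * / j).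
  { unfold v. rewrite Cmod_div by auto. eapply Rle_trans. apply (div_le _ _ (Cmod h) (j / rho)); auto.
    lra. apply Rdiv_lt_0_compat; lra. right. field. lra. }
  pose proof (Cmod_ge_0 u). pose proof (Cmod_ge_0 v).
  assert (HE : Cmod (Cminus (Cminus (cexp u) (RtoC 1)) u) <= 3 * exp 1 * (Cmod h ^ 2 * / j ^ 2)).
  { eapply Rle_trans. apply cexp_bound. pose proof (exp_pos (Cmod u)).
    assert (exp (Cmod u) <= exp 1) by (apply exp_mono; auto).
    assert (Cmod u ^ 2 <= Cmod h ^ 2 * / j ^ 2).
    { replace (Cmod h ^ 2 * / j ^ 2) with ((Cmod h * / j) ^ 2) by (field; lra). apply pow_incr; lra. }
    assert (0 <= Cmod u ^ 2) by nra.
    replace (3 * exp 1 * (Cmod h ^ 2 * / j ^ 2)) with (3 * (Cmod h ^ 2 * / j ^ 2) * exp 1) by ring.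
    apply Rmult_le_compat; lra. }
  assert (HV : Cmod (Cminus (Cmult v v) (Cmult u v)) <= (rho ^ 2 + rho) * (Cmod h ^ 2 * / j ^ 2)).
  { unfold Cminus. eapply Rle_trans. apply Cmod_triangle. rewrite Cmod_opp, !Cmod_mult.
    assert (Cmod v * Cmod v <= (Cmod h * rho * / j) * (Cmod h * rho * / j)) by (apply Rmult_le_compat; lra).
    assert (Cmod u * Cmod v <= (Cmod h * / j) * (Cmod h * rho * / j)) by (apply Rmult_le_compat; lra).
    replace ((rho ^ 2 + rho) * (Cmod h ^ 2 * / j ^ 2)) with
      ((Cmod h * rho * / j) * (Cmod h * rho * / j) + (Cmod h * / j) * (Cmod h * rho * / j)) by (field; lra).
    lra. }
  eapply Rle_trans. apply (div_le _ _ ((3 * exp 1 + (rho ^ 2 + rho)) * (Cmod h ^ 2 * / j ^ 2)) (/ 2)).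
  apply Cmod_ge_0. eapply Rle_trans. apply Cmod_triangle. lra. lra. lra.
  right. unfold K1b. rewrite Hiq. field. lra.
Qed.
End BFactors.


Lemma pr_S f n : pr f (S n) = Cmult (pr f n) (f n).
Proof. reflexivity. Qed.

Lemma pr_ext f g n : (forall i, f i = g i) -> pr f n = pr g n.
Proof. intros H; induction n; simpl; auto. rewrite IHn, H; auto. Qed.

Lemma pr_mult f g n : Cmult (pr f n) (pr g n) = pr (fun i => Cmult (f i) (g i)) n.
Proof. induction n; simpl. ring. rewrite <- IHn. ring. Qed.

Lemma pr_one n : pr (fun _ => RtoC 1) n = RtoC 1.
Proof. induction n; simpl; auto. rewrite IHn. ring. Qed.

Lemma pr_nz f n : (forall i, f i <> RtoC 0) -> pr f n <> RtoC 0.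
Proof. intros H; induction n; simpl. apply C1_nz. apply Cmult_neq_0; auto. Qed.

Definition Pq (z : C) n := pr (fun i => Cplus z (RtoC (INR (S i)))) n.

Lemma cpoch_Pq z n : cpoch z n = Cmult z (Pq z n).
Proof. induction n; simpl. unfold Pq; simpl. ring. rewrite IHn. unfold Pq; simpl. ring. Qed.

Lemma nonpole_nz z : nonpole z -> z <> RtoC 0.
Proof. intros H E. apply (H O). simpl. rewrite E. ring. Qed.

Lemma Pq_nz z n : nonpole z -> Pq z n <> RtoC 0.
Proof. intros H. apply pr_nz. intros i. apply H. Qed.

Lemma cexp_mult0 z : cexp (Cmult z (RtoC 0)) = RtoC 1.
Proof. rewrite Cmult_0_r. apply cexp_0. Qed.

Lemma ln_0' : ln 0 = 0.
Proof. unfold ln. destruct (Rlt_dec 0 0) as [H|H]. exfalso. apply (Rlt_irrefl 0 H). reflexivity. Qed.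

Lemma pr_af z n : nonpole z ->
  pr (af z) n = Cdiv (Cmult (cexp (Cmult z (RtoC (ln (INR (S n)))))) (RtoC (INR (fact n)))) (Pq z n).
Proof.
  intros Hz. induction n.
  - simpl. unfold Pq; simpl. rewrite ln_1, cexp_mult0. field.
  - rewrite pr_S, IHn. unfold af.
    assert (E : cexp (Cmult z (RtoC (ln (INR (S (S n)))))) = Cmult (cexp (Cmult z (RtoC (ln (INR (S n)))))) (cexp (Cmult z (RtoC (ell n))))).
    { rewrite <- cexp_add. f_equal. unfold ell. rewrite RtoC_minus. ring. }
    rewrite E. unfold Pq. rewrite pr_S. fold (Pq z n).
    replace (fact (S n)) with (S n * fact n)%nat by reflexivity. rewrite mult_INR, RtoC_mult.
    field. split. apply Hz. apply Pq_nz; auto.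
Qed.

Definition epsn (n : nat) : R := ln (INR (S n)) - ln (INR n).

Lemma gamma_rep z n : nonpole z ->
  gamma_term z n = Cmult (Cmult (Cinv z) (pr (af z) n)) (cexp (Copp (Cmult z (RtoC (epsn n))))).
Proof.
  intros Hz. rewrite pr_af by auto. unfold gamma_term. rewrite cpoch_Pq.
  assert (E : cexp (Cmult z (RtoC (ln (INR n)))) = Cmult (cexp (Cmult z (RtoC (ln (INR (S n)))))) (cexp (Copp (Cmult z (RtoC (epsn n)))))).
  { rewrite <- cexp_add. f_equal. unfold epsn. rewrite RtoC_minus. ring. }
  rewrite E. field. split. apply Pq_nz; auto. apply nonpole_nz; auto.
Qed.

Lemma epsn_bound n : 0 <= epsn n /\ epsn n <= 1 /\ epsn n <= 2 / (INR n + 1).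
Proof.
  destruct n.
  - unfold epsn. simpl. rewrite ln_1, ln_0'. lra.
  - replace (epsn (S n)) with (ell n) by reflexivity. destruct (ell_bounds n) as [H1 [H2 H3]].
    pose proof (INR_S_pos n). assert (/ INR (S n) <= 1) by (rewrite <- Rinv_1; apply Rinv_le_contravar; lra).
    split; auto. split. lra. eapply Rle_trans. apply H2.
    set (t := INR (S n)) in *. unfold Rdiv. apply Rmult_le_reg_l with (t * (t + 1)). nra.
    replace (t * (t + 1) * / t) with (t + 1) by (field; lra).
    replace (t * (t + 1) * (2 * / (t + 1))) with (2 * t) by (field; lra). lra.
Qed.

Lemma cexp_m1 w : Cmod (Cminus (cexp w) (RtoC 1)) <= Cmod w * (1 + 3 * Cmod w * exp (Cmod w)).
Proof.
  replace (Cminus (cexp w) (RtoC 1)) with (Cplus (Cminus (Cminus (cexp w) (RtoC 1)) w) w) by ring.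
  eapply Rle_trans. apply Cmod_triangle. pose proof (cexp_bound w). nra.
Qed.

Lemma clim_cexp_eps z : clim (fun n => cexp (Copp (Cmult z (RtoC (epsn n))))) (RtoC 1).
Proof.
  apply (clim_rate _ _ (2 * Cmod z * (1 + 3 * Cmod z * exp (Cmod z)))).
  intros n. destruct (epsn_bound n) as [E1 [E2 E3]].
  set (w := Copp (Cmult z (RtoC (epsn n)))).
  assert (Hw : Cmod w = Cmod z * epsn n) by (unfold w; rewrite Cmod_opp, Cmod_mult, Cmod_R, Rabs_right; lra).
  pose proof (Cmod_ge_0 z).
  eapply Rle_trans. apply cexp_m1.
  assert (Cmod w <= Cmod z) by (rewrite Hw; nra).
  assert (Cmod w <= Cmod z * (2 / (INR n + 1))) by (rewrite Hw; apply Rmult_le_compat_l; auto).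
  assert (1 + 3 * Cmod w * exp (Cmod w) <= 1 + 3 * Cmod z * exp (Cmod z)).
  { assert (exp (Cmod w) <= exp (Cmod z)) by (apply exp_mono; auto).
    pose proof (exp_pos (Cmod w)). pose proof (Cmod_ge_0 w). nra. }
  replace (2 * Cmod z * (1 + 3 * Cmod z * exp (Cmod z)) / (INR n + 1)) with
    ((Cmod z * (2 / (INR n + 1))) * (1 + 3 * Cmod z * exp (Cmod z))) by (field; pose proof (pos_INR n); lra).
  apply Rmult_le_compat; auto. apply Cmod_ge_0. pose proof (exp_pos (Cmod w)). pose proof (Cmod_ge_0 w). nra.
Qed.

Lemma Ka_nonneg z m : 0 < m -> 0 <= Ka z m.
Proof.
  intros Hm. unfold Ka. pose proof (Cmod_ge_0 z). pose proof (exp_pos (Cmod z)).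
  assert (0 <= Cmod z / m) by (apply Rdiv_le_0_compat; lra).
  apply Rmult_le_pos. nra. lra.
Qed.

Lemma Kar_nonneg z : 0 <= Kar z.
Proof. unfold Kar. pose proof (Cmod_ge_0 z). pose proof (exp_pos (Cmod z)). pose proof (pow_le _ 3 H). nra. Qed.

Lemma Aprod_ex z : nonpole z -> exists A, clim (pr (af z)) A /\ A <> RtoC 0.
Proof.
  intros Hz. destruct (nonpole_bound z Hz) as [m [Hm Hb]].
  destruct (prod_conv (fun i => Cminus (af z i) (RtoC 1)) (Ka z m) (Ka_nonneg z m Hm) (af_bound z m Hm Hb)) as [A HA].
  destruct (prod_conv (fun i => Cminus (arf z i) (RtoC 1)) (Kar z) (Kar_nonneg z) (arf_bound z)) as [B HB].
  assert (HA' : clim (pr (af z)) A).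
  { eapply clim_ext with (N := O). 2: apply HA. intros n _. apply pr_ext. intros; ring. }
  assert (HB' : clim (pr (arf z)) B).
  { eapply clim_ext with (N := O). 2: apply HB. intros n _. apply pr_ext. intros; ring. }
  exists A. split; auto. intros E.
  pose proof (clim_mult _ _ _ _ HA' HB') as HAB.
  assert (H1 : clim (fun n => Cmult (pr (af z) n) (pr (arf z) n)) (RtoC 1)).
  { eapply clim_ext with (N := O). 2: apply clim_const. intros n _. rewrite pr_mult.
    rewrite <- (pr_one n). apply pr_ext. intros i. symmetry. apply (af_arf z m Hm Hb). }
  pose proof (clim_unique _ _ _ HAB H1). rewrite E in H. rewrite Cmult_0_l in H. apply C1_nz. auto.
Qed.

Lemma gamma_lim z A : nonpole z -> clim (pr (af z)) A -> clim (gamma_term z) (Cmult (Cinv z) A).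
Proof.
  intros Hz HA. replace (Cmult (Cinv z) A) with (Cmult (Cmult (Cinv z) A) (RtoC 1)) by ring.
  eapply clim_ext with (N := O). intros n _. symmetry. apply gamma_rep; auto.
  apply clim_mult. apply clim_scal. auto. apply clim_cexp_eps.
Qed.

Lemma CGamma_of_lim z L : clim (gamma_term z) L -> CGamma z = L.
Proof.
  intros H. apply clim_filterlim in H. unfold CGamma.
  assert (Hs := epsilon_spec (inhabits (RtoC 0)) (fun l => filterlim (gamma_term z) eventually (locally l)) (ex_intro _ L H)).
  simpl in Hs. exact (filterlim_locally_unique _ _ _ Hs H).
Qed.

Lemma Cinv_nz z : z <> RtoC 0 -> Cinv z <> RtoC 0.
Proof. intros H E. apply C1_nz. rewrite <- (Cinv_r z H), E. ring. Qed.

Lemma CGamma_nz z : nonpole z -> CGamma z <> RtoC 0.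
Proof.
  intros Hz. destruct (Aprod_ex z Hz) as [A [HA HA0]].
  rewrite (CGamma_of_lim z _ (gamma_lim z A Hz HA)).
  apply Cmult_neq_0; auto. apply Cinv_nz, nonpole_nz; auto.
Qed.


Lemma cpoch_shift z n : Cmult (cpoch (Cplus z (RtoC 1)) n) z = Cmult (cpoch z n) (Cplus z (RtoC (INR (S n)))).
Proof.
  induction n.
  - simpl. ring.
  - change (cpoch (Cplus z (RtoC 1)) (S n)) with (Cmult (cpoch (Cplus z (RtoC 1)) n) (Cplus (Cplus z (RtoC 1)) (RtoC (INR (S n))))).
    change (cpoch z (S n)) with (Cmult (cpoch z n) (Cplus z (RtoC (INR (S n))))).
    replace (Cmult (Cmult (cpoch (Cplus z (RtoC 1)) n) (Cplus (Cplus z (RtoC 1)) (RtoC (INR (S n))))) z)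
      with (Cmult (Cmult (cpoch (Cplus z (RtoC 1)) n) z) (Cplus (Cplus z (RtoC 1)) (RtoC (INR (S n))))) by ring.
    rewrite IHn. rewrite (S_INR (S n)), RtoC_plus. ring.
Qed.

Lemma nonpole_shift1 z : nonpole z -> nonpole (Cplus z (RtoC 1)).
Proof. intros H j. replace (Cplus (Cplus z (RtoC 1)) (RtoC (INR j))) with (Cplus z (RtoC (INR (S j)))).
  apply H. rewrite S_INR, RtoC_plus. ring. Qed.

Lemma gamma_term_shift z n : nonpole z -> (1 <= n)%nat ->
  gamma_term (Cplus z (RtoC 1)) n = Cmult (Cmult (gamma_term z n) z) (Cdiv (RtoC (INR n)) (Cplus z (RtoC (INR (S n))))).
Proof.
  intros Hz Hn. unfold gamma_term.
  assert (Hn0 : 0 < INR n) by (apply lt_0_INR; lia).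
  assert (E : cexp (Cmult (Cplus z (RtoC 1)) (RtoC (ln (INR n)))) = Cmult (cexp (Cmult z (RtoC (ln (INR n))))) (RtoC (INR n))).
  { replace (Cmult (Cplus z (RtoC 1)) (RtoC (ln (INR n)))) with (Cplus (Cmult z (RtoC (ln (INR n)))) (RtoC (ln (INR n)))) by ring.
    rewrite cexp_add, cexp_R, exp_ln; auto. }
  rewrite E.
  assert (H1 : cpoch (Cplus z (RtoC 1)) n <> RtoC 0) by (rewrite cpoch_Pq; apply Cmult_neq_0; [apply nonpole_nz|apply Pq_nz]; apply nonpole_shift1; auto).
  assert (H2 : cpoch z n <> RtoC 0) by (rewrite cpoch_Pq; apply Cmult_neq_0; [apply nonpole_nz|apply Pq_nz]; auto).
  assert (H3 : Cplus z (RtoC (INR (S n))) <> RtoC 0) by apply Hz.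
  assert (H4 := cpoch_shift z n).
  assert (Hc : cpoch (Cplus z (RtoC 1)) n = Cdiv (Cmult (cpoch z n) (Cplus z (RtoC (INR (S n))))) z).
  { rewrite <- H4. field. apply nonpole_nz; auto. }
  rewrite Hc. field. repeat split; auto. apply nonpole_nz; auto.
Qed.

Lemma clim_ratio z : nonpole z -> clim (fun n => Cdiv (RtoC (INR n)) (Cplus z (RtoC (INR (S n))))) (RtoC 1).
Proof.
  intros Hz. destruct (nonpole_bound z Hz) as [m [Hm Hb]].
  set (rho := 1 + Cmod z / m).
  assert (Hr : 1 <= rho) by apply (rho_ge1 z m Hm).
  apply (clim_rate _ _ (Cmod (Cplus z (RtoC 1)) * rho)). intros n.
  assert (Hq : Cplus z (RtoC (INR (S n))) <> RtoC 0) by apply Hz.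
  replace (Cminus (Cdiv (RtoC (INR n)) (Cplus z (RtoC (INR (S n))))) (RtoC 1))
    with (Cdiv (Copp (Cplus z (RtoC 1))) (Cplus z (RtoC (INR (S n))))).
  2: { assert (Eq : RtoC (INR n) = Cminus (Cminus (Cplus z (RtoC (INR (S n)))) z) (RtoC 1)) by (rewrite S_INR, RtoC_plus; ring).
       rewrite Eq at 1. field. auto. }
  rewrite Cmod_div, Cmod_opp by auto.
  pose proof (q_lower z m Hm Hb n) as Hql. fold rho in Hql. rewrite S_INR in Hql.
  eapply Rle_trans. apply (div_le _ _ (Cmod (Cplus z (RtoC 1))) ((INR n + 1) / rho)). apply Cmod_ge_0. lra.
  apply Rdiv_lt_0_compat; [pose proof (pos_INR n)|]; lra. rewrite <- S_INR. apply (q_lower z m Hm Hb n).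
  right. field. split; pose proof (pos_INR n); lra.
Qed.

Lemma Gamma_shift z : nonpole z -> CGamma (Cplus z (RtoC 1)) = Cmult z (CGamma z).
Proof.
  intros Hz. destruct (Aprod_ex z Hz) as [A [HA HA0]].
  pose proof (gamma_lim z A Hz HA) as HG. rewrite (CGamma_of_lim z _ HG).
  apply CGamma_of_lim.
  replace (Cmult z (Cmult (Cinv z) A)) with (Cmult (Cmult (Cmult (Cinv z) A) z) (RtoC 1)) by ring.
  eapply clim_ext with (N := 1%nat). intros n Hn. symmetry. apply gamma_term_shift; auto.
  apply clim_mult. apply clim_mult. auto. apply clim_const. apply clim_ratio; auto.
Qed.

Lemma Cmod_z_ge z m : (forall j, m <= Cmod (Cplus z (RtoC (INR j)))) -> m <= Cmod z.
Proof. intros H. specialize (H O). simpl INR in H. rewrite Cplus_0_r in H. auto. Qed.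

Lemma nonpole_near z m h : 0 < m -> (forall j, m <= Cmod (Cplus z (RtoC (INR j)))) -> Cmod h < m ->
  nonpole (Cplus z h).
Proof.
  intros Hm Hb Hh j E. pose proof (Cmod_rev_tri (Cplus z (RtoC (INR j))) h).
  replace (Cplus (Cplus z (RtoC (INR j))) h) with (Cplus (Cplus z h) (RtoC (INR j))) in H by ring.
  rewrite E, Cmod_0 in H. specialize (Hb j). lra.
Qed.

Lemma Gamma_has_deriv z : nonpole z -> exists D, is_derive CGamma z D.
Proof.
  intros Hz. destruct (nonpole_bound z Hz) as [m [Hm Hb]].
  destruct (Aprod_ex z Hz) as [A [HA HA0]].
  set (K1 := K1b z m). set (K2 := K2b z m).
  assert (Hr : 1 <= 1 + Cmod z / m) by apply (rho_ge1 z m Hm).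
  assert (HK1 : 0 <= K1). { unfold K1, K1b. pose proof (exp_pos 1). nra. }
  assert (HK2 : 0 <= K2). { unfold K2, K2b. pose proof (Cmod_ge_0 z). nra. }
  destruct (sum_conv (cf z) K2 HK2 (cf_bound z m Hm Hb)) as [S HS].
  assert (Hzn : z <> RtoC 0) by (apply nonpole_nz; auto).
  assert (Hzm : m <= Cmod z) by (apply Cmod_z_ge; auto).
  set (Kq := 2 * (QC0 K1 K2 * (K1 + K2) + K1)).
  assert (HQ0 : 0 <= QC0 K1 K2) by (unfold QC0; pose proof (exp_pos (2 * (K1 + K2))); nra).
  assert (HKq : 0 <= Kq) by (unfold Kq; nra).
  exists (Cmult (Cmult (Cinv z) A) (Cminus S (Cinv z))).
  apply QD. exists (Rmin 1 (m / 2)), (Cmod A / m * (Kq + QC0 K1 K2 * (2 / m) + 2 / (m * m))).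
  split. apply Rmin_pos; lra.
  intros h Hh. assert (Hh1 : Cmod h <= 1) by (left; eapply Rlt_le_trans; [apply Hh|apply Rmin_l]).
  assert (Hh2 : Cmod h <= m / 2) by (left; eapply Rlt_le_trans; [apply Hh|apply Rmin_r]).
  pose proof (Cmod_ge_0 h) as Hh0.
  assert (Hzh : nonpole (Cplus z h)) by (apply (nonpole_near z m); auto; lra).
  assert (Hc := cf_bound z m Hm Hb). fold K2 in Hc.
  assert (Hxc : forall i, Cmod (Cminus (Cminus (bf z h i) (RtoC 1)) (Cmult h (cf z i))) <= K1 * Cmod h ^ 2 * iq i).
  { intros i. apply bf_quad; auto. }
  pose proof (QP_x (fun i => Cminus (bf z h i) (RtoC 1)) (cf z) h K1 K2 HK1 Hh1 Hc Hxc) as Hx.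
  assert (HA' : 0 <= (K1 + K2) * Cmod h) by nra.
  destruct (prod_conv _ _ HA' Hx) as [B HB].
  assert (HB' : clim (pr (bf z h)) B).
  { eapply clim_ext with (N := O). 2: apply HB. intros n _. apply pr_ext. intros; ring. }
  assert (HG1 : CGamma z = Cmult (Cinv z) A) by (apply CGamma_of_lim, gamma_lim; auto).
  assert (HG2 : CGamma (Cplus z h) = Cmult (Cinv (Cplus z h)) (Cmult A B)).
  { apply CGamma_of_lim, gamma_lim; auto.
    eapply clim_ext with (N := O). 2: apply (clim_mult _ _ _ _ HA HB').
    intros n _. cbv beta. rewrite pr_mult. apply pr_ext. intros i. symmetry. apply af_shift. apply Hz. apply Hzh. }
  assert (HE : Cmod (Cminus (Cplus B (Cmult (Copp h) S)) (RtoC 1)) <= Kq * Cmod h ^ 2).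
  { apply (clim_le (fun n => Cplus (pr (fun i => Cplus (RtoC 1) (Cminus (bf z h i) (RtoC 1))) n) (Cmult (Copp h) (sm (cf z) n))) _ _ _ O).
    apply clim_plus; auto. apply clim_scal; auto.
    intros n _. pose proof (QP_E (fun i => Cminus (bf z h i) (RtoC 1)) (cf z) h K1 K2 HK1 HK2 Hh1 Hc Hxc n) as Q.
    fold Kq in Q. replace (Kq * Cmod h ^ 2) with (2 * (QC0 K1 K2 * (K1 + K2) + K1) * Cmod h ^ 2) by reflexivity.
    eapply Rle_trans. 2: apply Q. right. f_equal. ring. }
  assert (HB1 : Cmod (Cminus B (RtoC 1)) <= QC0 K1 K2 * Cmod h).
  { apply (clim_le _ _ _ _ O HB). intros n _.
    apply (QP_m1 (fun i => Cminus (bf z h i) (RtoC 1)) (cf z) h K1 K2 HK1 HK2 Hh1 Hc Hxc n). }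
  rewrite HG1, HG2.
  assert (Hzh0 : Cplus z h <> RtoC 0) by (apply nonpole_nz; auto).
  assert (Hzhm : m / 2 <= Cmod (Cplus z h)).
  { pose proof (Cmod_rev_tri z h). lra. }
  replace (Cminus (Cminus (Cmult (Cinv (Cplus z h)) (Cmult A B)) (Cmult (Cinv z) A)) (Cmult h (Cmult (Cmult (Cinv z) A) (Cminus S (Cinv z)))))
    with (Cmult (Cmult (Cinv z) A) (Cplus (Cminus (Cminus (Cplus B (Cmult (Copp h) S)) (RtoC 1))
            (Cdiv (Cmult h (Cminus B (RtoC 1))) (Cplus z h))) (Cdiv (Cmult h h) (Cmult z (Cplus z h)))))
    by (field; auto).
  rewrite Cmod_mult, Cmod_mult, Cmod_inv by auto.
  assert (T1 : Cmod (Cdiv (Cmult h (Cminus B (RtoC 1))) (Cplus z h)) <= QC0 K1 K2 * (2 / m) * Cmod h ^ 2).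
  { rewrite Cmod_div, Cmod_mult by auto. eapply Rle_trans.
    apply (div_le _ _ (Cmod h * (QC0 K1 K2 * Cmod h)) (m / 2)).
    apply Rmult_le_pos; auto; apply Cmod_ge_0. apply Rmult_le_compat_l; auto. lra. auto.
    right. field. lra. }
  assert (T2 : Cmod (Cdiv (Cmult h h) (Cmult z (Cplus z h))) <= 2 / (m * m) * Cmod h ^ 2).
  { rewrite Cmod_div, !Cmod_mult by (apply Cmult_neq_0; auto). eapply Rle_trans.
    apply (div_le _ _ (Cmod h * Cmod h) (m * (m / 2))). nra. lra. nra.
    apply Rmult_le_compat; lra.
    right. field. lra. }
  set (X := Cplus (Cminus (Cminus (Cplus B (Cmult (Copp h) S)) (RtoC 1))
            (Cdiv (Cmult h (Cminus B (RtoC 1))) (Cplus z h))) (Cdiv (Cmult h h) (Cmult z (Cplus z h)))).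
  assert (TX : Cmod X <= (Kq + QC0 K1 K2 * (2 / m) + 2 / (m * m)) * Cmod h ^ 2).
  { unfold X. eapply Rle_trans. apply Cmod_triangle. unfold Cminus at 1.
    eapply Rle_trans. apply Rplus_le_compat_r. apply Cmod_triangle. rewrite Cmod_opp. lra. }
  assert (HAz : / Cmod z * Cmod A <= Cmod A / m).
  { unfold Rdiv. rewrite Rmult_comm. apply Rmult_le_compat_l. apply Cmod_ge_0.
    apply Rinv_le_contravar; lra. }
  pose proof (Cmod_ge_0 X). pose proof (Cmod_ge_0 A).
  assert (0 <= / Cmod z * Cmod A) by (apply Rmult_le_pos; auto; left; apply Rinv_0_lt_compat; lra).
  replace (Cmod A / m * (Kq + QC0 K1 K2 * (2 / m) + 2 / (m * m)) * Cmod h ^ 2)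
    with (Cmod A / m * ((Kq + QC0 K1 K2 * (2 / m) + 2 / (m * m)) * Cmod h ^ 2)) by ring.
  apply Rmult_le_compat; auto.
Qed.

Lemma Gamma_deriv z : nonpole z -> is_derive CGamma z (CGamma' z).
Proof.
  intros Hz. destruct (Gamma_has_deriv z Hz) as [D HD].
  unfold CGamma'.
  apply (epsilon_spec (inhabits (RtoC 0)) (fun d => is_derive (K := C_AbsRing) (V := C_NormedModule) CGamma z d)).
  exists D. exact HD.
Qed.


Lemma sm_S f N : sm f (S N) = Cplus (sm f N) (f N).
Proof. reflexivity. Qed.

Lemma sm_ext_lt f g N : (forall i, (i < N)%nat -> f i = g i) -> sm f N = sm g N.
Proof. induction N; intros H; simpl; auto. rewrite IHN, H; auto. Qed.

Lemma sm_plus f g N : sm (fun i => Cplus (f i) (g i)) N = Cplus (sm f N) (sm g N).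
Proof. induction N; simpl. ring. rewrite IHN. ring. Qed.

Lemma sm_scal c f N : sm (fun i => Cmult c (f i)) N = Cmult c (sm f N).
Proof. induction N; simpl. ring. rewrite IHN. ring. Qed.

Lemma sm_zero N : sm (fun _ => RtoC 0) N = RtoC 0.
Proof. induction N; simpl; auto. rewrite IHN. ring. Qed.

Lemma sm_shift f N : sm f (S N) = Cplus (f O) (sm (fun i => f (S i)) N).
Proof. induction N. simpl. ring. rewrite sm_S, IHN. simpl. ring. Qed.

Lemma csum_sm n f : csum n f = sm f (S n).
Proof. induction n; simpl. ring. rewrite IHn. reflexivity. Qed.

Lemma sm_exchange (F : nat -> nat -> C) N :
  sm (fun k => sm (fun j => F j k) (S k)) N = sm (fun j => sm (fun i => F j (j + i)%nat) (N - j)) N.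
Proof.
  induction N.
  - reflexivity.
  - rewrite sm_S, IHN.
    rewrite (sm_ext_lt (fun j => sm (fun i => F j (j + i)%nat) (S N - j)) (fun j => Cplus (sm (fun i => F j (j + i)%nat) (N - j)) (F j N))).
    2: { intros i Hi. replace (S N - i)%nat with (S (N - i)) by lia. rewrite sm_S. f_equal. f_equal. lia. }
    rewrite sm_plus. rewrite (sm_S (fun j => sm (fun i => F j (j + i)%nat) (N - j))).
    replace (N - N)%nat with O by lia. simpl. ring.
Qed.

Definition poch (a : C) (k : nat) : C := pr (fun i => Cplus a (RtoC (INR i))) k.

Lemma poch_S a k : poch a (S k) = Cmult (poch a k) (Cplus a (RtoC (INR k))).
Proof. reflexivity. Qed.

Lemma poch_add a j i : poch a (j + i) = Cmult (poch a j) (poch (Cplus a (RtoC (INR j))) i).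
Proof.
  induction i.
  - rewrite Nat.add_0_r. unfold poch at 3. simpl. ring.
  - replace (j + S i)%nat with (S (j + i)) by lia. rewrite !poch_S, IHi, plus_INR, RtoC_plus. ring.
Qed.

Lemma poch_shift1 a k : Cmult a (poch (Cplus a (RtoC 1)) k) = Cmult (poch a k) (Cplus a (RtoC (INR k))).
Proof.
  rewrite <- poch_S. replace (S k) with (1 + k)%nat by lia. rewrite poch_add. unfold poch at 2. simpl. f_equal. ring.
Qed.

Definition bC (n k : nat) : C := RtoC (Binomial.C n k).

Lemma bC_n0 n : bC n 0 = RtoC 1.
Proof. unfold bC, Binomial.C. rewrite Nat.sub_0_r. simpl. f_equal. field. apply INR_fact_neq_0. Qed.

Lemma bC_nn n : bC n n = RtoC 1.
Proof. unfold bC, Binomial.C. rewrite Nat.sub_diag. simpl. f_equal. field. apply INR_fact_neq_0. Qed.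

Lemma bC_pascal n i : (i < n)%nat -> bC (S n) (S i) = Cplus (bC n i) (bC n (S i)).
Proof. intros H. unfold bC. rewrite <- RtoC_plus. f_equal. symmetry. apply pascal. auto. Qed.

Lemma pascal_sum m (X : nat -> C) :
  sm (fun i => Cmult (bC (S m) i) (X i)) (S (S m)) =
  Cplus (sm (fun i => Cmult (bC m i) (X i)) (S m)) (sm (fun i => Cmult (bC m i) (X (S i))) (S m)).
Proof.
  rewrite sm_shift. rewrite bC_n0.
  rewrite (sm_S (fun i => Cmult (bC (S m) (S i)) (X (S i))) m).
  rewrite (sm_ext_lt (fun i => Cmult (bC (S m) (S i)) (X (S i))) (fun i => Cplus (Cmult (bC m i) (X (S i))) (Cmult (bC m (S i)) (X (S i))))).
  2: { intros i Hi. rewrite bC_pascal by auto. ring. }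
  rewrite sm_plus, bC_nn.
  rewrite (sm_shift (fun i => Cmult (bC m i) (X i)) m), bC_n0.
  rewrite (sm_S (fun i => Cmult (bC m i) (X (S i))) m), bC_nn.
  ring.
Qed.

Lemma alt_sum m : sm (fun i => Cmult (bC (S m) i) (RtoC ((-1) ^ i))) (S (S m)) = RtoC 0.
Proof.
  rewrite pascal_sum. rewrite <- sm_plus. rewrite <- (sm_zero (S m)).
  apply sm_ext_lt. intros i _. simpl pow. rewrite RtoC_mult. ring.
Qed.

Lemma vandermonde m : forall a b,
  sm (fun i => Cmult (Cmult (bC m i) (poch a i)) (poch b (m - i))) (S m) = poch (Cplus a b) m.
Proof.
  induction m; intros a b.
  - simpl. rewrite bC_nn. unfold poch. simpl. ring.
  - rewrite (sm_ext_lt _ (fun i => Cmult (bC (S m) i) (Cmult (poch a i) (poch b (S m - i))))).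
    2: { intros; ring. }
    rewrite pascal_sum.
    rewrite poch_S, <- IHm, <- sm_plus.
    rewrite Cmult_comm, <- sm_scal.
    apply sm_ext_lt. intros i Hi.
    replace (S m - i)%nat with (S (m - i)) by lia. replace (S m - S i)%nat with (m - i)%nat by lia.
    rewrite !poch_S.
    assert (E : RtoC (INR m) = Cplus (RtoC (INR (m - i))) (RtoC (INR i))).
    { rewrite <- RtoC_plus, <- plus_INR. f_equal. f_equal. lia. }
    rewrite E. ring.
Qed.

Definition gf (j : nat) : C := Cdiv (RtoC ((-1) ^ j)) (Cmult (Cplus (cn j) (RtoC 1)) (Cplus (cn j) (RtoC 2))).

Lemma bC_ratio k j : (j <= k)%nat ->
  Cmult (Cmult (bC k j) (Cplus (cn k) (RtoC 1))) (Cplus (cn k) (RtoC 2)) =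
  Cmult (Cmult (bC (S (S k)) (S (S j))) (Cplus (cn j) (RtoC 1))) (Cplus (cn j) (RtoC 2)).
Proof.
  intros H. unfold bC, cn. rewrite <- !RtoC_plus, <- !RtoC_mult. f_equal.
  unfold Binomial.C. replace (S (S k) - S (S j))%nat with (k - j)%nat by lia.
  rewrite !fact_simpl, !mult_INR, !S_INR.
  pose proof (INR_fact_neq_0 k). pose proof (INR_fact_neq_0 j). pose proof (INR_fact_neq_0 (k - j)).
  pose proof (pos_INR k). pose proof (pos_INR j).
  field. repeat split; lra.
Qed.

Lemma bC_n1 k : bC (S (S k)) 1 = Cplus (cn k) (RtoC 2).
Proof.
  unfold bC, cn. rewrite <- RtoC_plus. f_equal. unfold Binomial.C.
  replace (S (S k) - 1)%nat with (S k) by lia. rewrite (fact_simpl (S k)), mult_INR.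
  pose proof (INR_fact_neq_0 (S k)). replace (INR (fact 1)) with 1 by reflexivity.
  rewrite (S_INR (S k)), S_INR. field. auto.
Qed.

Lemma cn_nz1 k : Cplus (cn k) (RtoC 1) <> RtoC 0.
Proof. unfold cn. rewrite <- RtoC_plus. apply RtoC_nz. pose proof (pos_INR k). lra. Qed.
Lemma cn_nz2 k : Cplus (cn k) (RtoC 2) <> RtoC 0.
Proof. unfold cn. rewrite <- RtoC_plus. apply RtoC_nz. pose proof (pos_INR k). lra. Qed.

Lemma f_ident k : sm (fun j => Cmult (bC k j) (gf j)) (S k) = Cinv (Cplus (cn k) (RtoC 2)).
Proof.
  assert (H1 := cn_nz1 k). assert (H2 := cn_nz2 k).
  rewrite (sm_ext_lt _ (fun j => Cmult (Cinv (Cmult (Cplus (cn k) (RtoC 1)) (Cplus (cn k) (RtoC 2))))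
                                       (Cmult (bC (S (S k)) (S (S j))) (RtoC ((-1) ^ (S (S j))))))).
  2: { intros j Hj. unfold gf. assert (E := bC_ratio k j ltac:(lia)).
       assert (bC k j = Cdiv (Cmult (Cmult (bC (S (S k)) (S (S j))) (Cplus (cn j) (RtoC 1))) (Cplus (cn j) (RtoC 2)))
                             (Cmult (Cplus (cn k) (RtoC 1)) (Cplus (cn k) (RtoC 2)))).
       { rewrite <- E. field. auto. }
       rewrite H. replace ((-1) ^ S (S j)) with ((-1) ^ j) by (simpl; ring).
       field. repeat split; auto using cn_nz1, cn_nz2. }
  rewrite sm_scal.
  pose proof (alt_sum (S k)) as A. rewrite sm_shift, sm_shift in A.
  cbv beta in A. rewrite bC_n0, bC_n1 in A.
  replace (RtoC ((-1) ^ 0)) with (RtoC 1) in A by (f_equal; simpl; ring).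
  replace (RtoC ((-1) ^ 1)) with (Copp (RtoC 1)) in A by (rewrite <- RtoC_opp; f_equal; simpl; ring).
  assert (E : sm (fun i => Cmult (bC (S (S k)) (S (S i))) (RtoC ((-1) ^ S (S i)))) (S k) = Cplus (cn k) (RtoC 1)).
  { replace (Cplus (cn k) (RtoC 1)) with (Cminus (Cplus (cn k) (RtoC 2)) (RtoC 1)).
    2: { unfold cn. rewrite <- !RtoC_plus, <- RtoC_minus. f_equal. ring. }
    set (X := sm (fun i => Cmult (bC (S (S k)) (S (S i))) (RtoC ((-1) ^ S (S i)))) (S k)) in *.
    replace X with (Cminus X (Cplus (Cmult (RtoC 1) (RtoC 1)) (Cplus (Cmult (Cplus (cn k) (RtoC 2)) (Copp (RtoC 1))) X))) by (rewrite A; ring).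
    ring. }
  rewrite E. field. auto.
Qed.

Lemma bC_prod n j i : (j + i <= n)%nat -> Cmult (bC n (j + i)) (bC (j + i) j) = Cmult (bC n j) (bC (n - j) i).
Proof.
  intros H. unfold bC. rewrite <- !RtoC_mult. f_equal. unfold Binomial.C.
  replace (j + i - j)%nat with i by lia. replace (n - j - i)%nat with (n - (j + i))%nat by lia.
  pose proof (INR_fact_neq_0 n). pose proof (INR_fact_neq_0 j). pose proof (INR_fact_neq_0 i).
  pose proof (INR_fact_neq_0 (j + i)). pose proof (INR_fact_neq_0 (n - j)). pose proof (INR_fact_neq_0 (n - (j + i))).
  field. repeat split; auto.
Qed.

Lemma BT n a b (g : nat -> C) :
  sm (fun k => Cmult (Cmult (Cmult (bC n k) (poch a k)) (poch b (n - k))) (sm (fun j => Cmult (bC k j) (g j)) (S k))) (S n)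
  = sm (fun j => Cmult (Cmult (Cmult (bC n j) (poch a j)) (poch (Cplus (Cplus a b) (RtoC (INR j))) (n - j))) (g j)) (S n).
Proof.
  rewrite (sm_ext_lt _ (fun k => sm (fun j => Cmult (Cmult (Cmult (bC n k) (poch a k)) (poch b (n - k))) (Cmult (bC k j) (g j))) (S k))).
  2: { intros k _. rewrite sm_scal. reflexivity. }
  rewrite (sm_exchange (fun j k => Cmult (Cmult (Cmult (bC n k) (poch a k)) (poch b (n - k))) (Cmult (bC k j) (g j)))).
  apply sm_ext_lt. intros j Hj. replace (S n - j)%nat with (S (n - j)) by lia.
  rewrite (sm_ext_lt _ (fun i => Cmult (Cmult (Cmult (bC n j) (poch a j)) (g j)) (Cmult (Cmult (bC (n - j) i) (poch (Cplus a (RtoC (INR j))) i)) (poch b (n - j - i))))).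
  2: { intros i Hi. rewrite poch_add. replace (n - (j + i))%nat with (n - j - i)%nat by lia.
       assert (E := bC_prod n j i ltac:(lia)).
       transitivity (Cmult (Cmult (Cmult (bC n (j + i)) (bC (j + i) j)) (Cmult (poch a j) (poch (Cplus a (RtoC (INR j))) i))) (Cmult (poch b (n - j - i)) (g j))).
       ring. rewrite E. ring. }
  rewrite sm_scal, vandermonde.
  replace (Cplus (Cplus a (RtoC (INR j))) b) with (Cplus (Cplus a b) (RtoC (INR j))) by ring. ring.
Qed.

Lemma identA n a b :
  sm (fun k => Cmult (Cmult (Cmult (bC n k) (poch a k)) (poch b (n - k))) (Cinv (Cplus (cn k) (RtoC 2)))) (S n)
  = sm (fun j => Cmult (Cmult (Cmult (bC n j) (poch a j)) (poch (Cplus (Cplus a b) (RtoC (INR j))) (n - j))) (gf j)) (S n).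
Proof.
  rewrite <- BT. apply sm_ext_lt. intros k _. rewrite f_ident. reflexivity.
Qed.


Lemma Cinv_0 : Cinv (RtoC 0) = RtoC 0.
Proof. unfold Cinv, RtoC; simpl. f_equal; unfold Rdiv; ring. Qed.

Lemma Cinv_mult_all x y : Cinv (Cmult x y) = Cmult (Cinv x) (Cinv y).
Proof.
  destruct (Ceq_dec x (RtoC 0)) as [Hx|Hx]. subst. rewrite Cmult_0_l, Cinv_0. ring.
  destruct (Ceq_dec y (RtoC 0)) as [Hy|Hy]. subst. rewrite Cmult_0_r, Cinv_0. ring.
  field. auto.
Qed.

Lemma Cinv_Cinv_all x : Cinv (Cinv x) = x.
Proof.
  destruct (Ceq_dec x (RtoC 0)) as [Hx|Hx]. subst. rewrite !Cinv_0. auto.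
  field. auto.
Qed.

Lemma Cinv_Cbinom x y : Cinv (Cbinom x y) =
  Cmult (Cmult (CGamma (Cplus y (RtoC 1))) (CGamma (Cplus (Cminus x y) (RtoC 1)))) (Cinv (CGamma (Cplus x (RtoC 1)))).
Proof.
  unfold Cbinom, Cdiv. rewrite Cinv_mult_all, Cinv_Cinv_all. ring.
Qed.

Lemma is_derive_Cinv w : w <> RtoC 0 -> is_derive (K := C_AbsRing) (V := C_NormedModule) Cinv w (Copp (Cmult (Cinv w) (Cinv w))).
Proof.
  intros Hw. apply QD. assert (Hm : 0 < Cmod w) by (apply Cmod_gt_0; auto).
  exists (Cmod w / 2), (2 / (Cmod w ^ 3)). split. lra.
  intros h Hh. assert (Hwh : Cmod w / 2 <= Cmod (Cplus w h)).
  { pose proof (Cmod_rev_tri w h). lra. }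
  assert (Hwh0 : Cplus w h <> RtoC 0). { intros E. rewrite E, Cmod_0 in Hwh. lra. }
  replace (Cminus (Cminus (Cinv (Cplus w h)) (Cinv w)) (Cmult h (Copp (Cmult (Cinv w) (Cinv w)))))
    with (Cdiv (Cmult h h) (Cmult (Cmult w w) (Cplus w h))) by (field; auto).
  rewrite Cmod_div, !Cmod_mult by (repeat apply Cmult_neq_0; auto).
  eapply Rle_trans. apply (div_le _ _ (Cmod h * Cmod h) (Cmod w * Cmod w * (Cmod w / 2))).
  pose proof (Cmod_ge_0 h); nra. lra. apply Rmult_lt_0_compat; [nra|lra]. apply Rmult_le_compat_l; [nra|lra].
  right. field. lra.
Qed.

Lemma is_derive_eq (f : C -> C) x l l' : is_derive (K := C_AbsRing) (V := C_NormedModule) f x l -> l = l' -> is_derive (K := C_AbsRing) (V := C_NormedModule) f x l'.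
Proof. intros H E; subst; auto. Qed.

Lemma is_derive_affine (f g : C -> C) r e d : (forall y, g y = Cplus y e) ->
  is_derive (K := C_AbsRing) (V := C_NormedModule) f (Cplus r e) d ->
  is_derive (K := C_AbsRing) (V := C_NormedModule) (fun y => f (g y)) r d.
Proof.
  intros Hg Hf.
  apply (is_derive_ext (fun y => f (Cplus y e))). intros t. rewrite Hg. auto.
  pose proof (is_derive_plus (K := C_AbsRing) (V := AbsRing_NormedModule C_AbsRing) (fun y => y) (fun _ => e) r one zero (is_derive_id r) (is_derive_const (V := AbsRing_NormedModule C_AbsRing) e r)) as Hd.
  pose proof (is_derive_comp f (fun y => plus y e) r d _ Hf Hd) as H.
  apply (is_derive_eq _ _ _ _ H). change (Cmult (Cplus (RtoC 1) (RtoC 0)) d = d). ring.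
Qed.

Lemma to_abs (f : C -> C) x d : is_derive (K:=C_AbsRing) (V:=C_NormedModule) f x d -> is_derive (K:=C_AbsRing) (V:=AbsRing_NormedModule C_AbsRing) f x d.
Proof. intros [Hl Hd]. split.
  - destruct Hl as [H1 H2 H3]. split. exact H1. exact H2. exact H3.
  - intros x0 Hx0 eps. exact (Hd x0 Hx0 eps).
Qed.
Lemma of_abs (f : C -> C) x d : is_derive (K:=C_AbsRing) (V:=AbsRing_NormedModule C_AbsRing) f x d -> is_derive (K:=C_AbsRing) (V:=C_NormedModule) f x d.
Proof. intros [Hl Hd]. split.
  - destruct Hl as [H1 H2 H3]. split. exact H1. exact H2. exact H3.
  - intros x0 Hx0 eps. exact (Hd x0 Hx0 eps).
Qed.

Lemma is_derive_Cmult (f g : C -> C) x df dg :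
  is_derive (K := C_AbsRing) (V := C_NormedModule) f x df ->
  is_derive (K := C_AbsRing) (V := C_NormedModule) g x dg ->
  is_derive (K := C_AbsRing) (V := C_NormedModule) (fun y => Cmult (f y) (g y)) x (Cplus (Cmult df (g x)) (Cmult (f x) dg)).
Proof.
  intros Hf Hg. apply of_abs. exact (is_derive_mult (K := C_AbsRing) f g x df dg (to_abs _ _ _ Hf) (to_abs _ _ _ Hg) Cmult_comm).
Qed.

Lemma is_derive_Cplus (f g : C -> C) x df dg :
  is_derive (K := C_AbsRing) (V := C_NormedModule) f x df ->
  is_derive (K := C_AbsRing) (V := C_NormedModule) g x dg ->
  is_derive (K := C_AbsRing) (V := C_NormedModule) (fun y => Cplus (f y) (g y)) x (Cplus df dg).
Proof. intros Hf Hg. exact (is_derive_plus f g x df dg Hf Hg). Qed.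

Lemma is_derive_Cconst (c : C) x : is_derive (K := C_AbsRing) (V := C_NormedModule) (fun _ => c) x (RtoC 0).
Proof. exact (is_derive_const (K := C_AbsRing) (V := C_NormedModule) c x). Qed.

Lemma is_derive_csum n (f : nat -> C -> C) (d : nat -> C) x :
  (forall k, (k <= n)%nat -> is_derive (K := C_AbsRing) (V := C_NormedModule) (f k) x (d k)) ->
  is_derive (K := C_AbsRing) (V := C_NormedModule) (fun y => csum n (fun k => f k y)) x (csum n d).
Proof.
  intros H. induction n.
  - simpl. apply H. lia.
  - simpl. apply is_derive_Cplus; auto.
Qed.

Lemma phi_deriv c b r : nonpole (Cplus b (RtoC 1)) -> nonpole (Cplus (Cminus (Cplus c r) b) (RtoC 1)) ->
  nonpole (Cplus (Cplus c r) (RtoC 1)) ->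
  is_derive (K := C_AbsRing) (V := C_NormedModule) (fun y => Cinv (Cbinom (Cplus c y) b)) r
    (Cmult (Cinv (Cbinom (Cplus c r) b))
       (Cminus (digamma (Cplus (Cminus (Cplus c r) b) (RtoC 1))) (digamma (Cplus (Cplus c r) (RtoC 1))))).
Proof.
  intros Hb HA HB.
  set (A := Cplus (Cminus (Cplus c r) b) (RtoC 1)) in *.
  set (B := Cplus (Cplus c r) (RtoC 1)) in *.
  apply (is_derive_ext (fun y => Cmult (Cmult (CGamma (Cplus b (RtoC 1))) (CGamma (Cplus (Cminus (Cplus c y) b) (RtoC 1))))
                                       (Cinv (CGamma (Cplus (Cplus c y) (RtoC 1)))))).
  { intros t. rewrite Cinv_Cbinom. reflexivity. }
  assert (dA : is_derive (K := C_AbsRing) (V := C_NormedModule) (fun y => CGamma (Cplus (Cminus (Cplus c y) b) (RtoC 1))) r (CGamma' A)).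
  { apply (is_derive_affine CGamma (fun y => Cplus (Cminus (Cplus c y) b) (RtoC 1)) r (Cplus (Cminus c b) (RtoC 1))).
    intros; ring. replace (Cplus r (Cplus (Cminus c b) (RtoC 1))) with A by (unfold A; ring). apply Gamma_deriv; auto. }
  assert (dB : is_derive (K := C_AbsRing) (V := C_NormedModule) (fun y => CGamma (Cplus (Cplus c y) (RtoC 1))) r (CGamma' B)).
  { apply (is_derive_affine CGamma (fun y => Cplus (Cplus c y) (RtoC 1)) r (Cplus c (RtoC 1))).
    intros; ring. replace (Cplus r (Cplus c (RtoC 1))) with B by (unfold B; ring). apply Gamma_deriv; auto. }
  assert (GB0 : CGamma B <> RtoC 0) by (apply CGamma_nz; auto).
  assert (GA0 : CGamma A <> RtoC 0) by (apply CGamma_nz; auto).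
  pose proof (is_derive_comp Cinv (fun y => CGamma (Cplus (Cplus c y) (RtoC 1))) r _ _ (is_derive_Cinv _ GB0) (to_abs _ _ _ dB)) as dIB.
  pose proof (is_derive_Cmult _ _ r _ _ (is_derive_Cmult _ _ r _ _ (is_derive_Cconst (CGamma (Cplus b (RtoC 1))) r) dA) dIB) as D.
  apply (is_derive_eq _ _ _ _ D).
  rewrite Cinv_Cbinom. fold A B. unfold digamma.
  change (scal (CGamma' B) (Copp (Cmult (Cinv (CGamma B)) (Cinv (CGamma B))))) with
    (Cmult (CGamma' B) (Copp (Cmult (Cinv (CGamma B)) (Cinv (CGamma B))))).
  match goal with |- ?a = ?b => change (@eq C a b) end.
  field. split; auto.
Qed.


Lemma np_of_negint z : ~ negint z -> nonpole (Cplus z (RtoC 1)).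
Proof.
  intros H j E. apply H. exists j.
  replace z with (Cminus (Cplus (Cplus z (RtoC 1)) (RtoC (INR j))) (Cplus (RtoC (INR j)) (RtoC 1))) by ring.
  rewrite E, S_INR, RtoC_opp, RtoC_plus. ring.
Qed.

Lemma nonpole_add z k : nonpole z -> nonpole (Cplus z (RtoC (INR k))).
Proof.
  intros H j. replace (Cplus (Cplus z (RtoC (INR k))) (RtoC (INR j))) with (Cplus z (RtoC (INR (k + j)))).
  apply H. rewrite plus_INR, RtoC_plus. ring.
Qed.

Lemma nonpole_eq z w : z = w -> nonpole z -> nonpole w.
Proof. intros E; subst; auto. Qed.

Lemma cks_nz s k : s <> RtoC 0 -> ~ negint s -> Cplus (cn k) s <> RtoC 0.
Proof.
  intros H0 Hn E. destruct k.
  - apply H0. unfold cn in E. simpl in E. rewrite Cplus_0_l in E. auto.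
  - apply Hn. exists k. replace s with (Cminus (Cplus (cn (S k)) s) (cn (S k))) by ring.
    rewrite E. unfold cn. rewrite RtoC_opp. ring.
Qed.

Lemma Gamma_poch a k : nonpole a -> CGamma (Cplus a (RtoC (INR k))) = Cmult (poch a k) (CGamma a).
Proof.
  intros Ha. induction k.
  - simpl INR. rewrite Cplus_0_r. unfold poch. simpl. ring.
  - rewrite poch_S. replace (Cplus a (RtoC (INR (S k)))) with (Cplus (Cplus a (RtoC (INR k))) (RtoC 1))
      by (rewrite S_INR, RtoC_plus; ring).
    rewrite Gamma_shift by (apply nonpole_add; auto). rewrite IHk. ring.
Qed.

Lemma poch_nz a k : nonpole a -> poch a k <> RtoC 0.
Proof. intros H. apply pr_nz. intros i. apply H. Qed.

Lemma csum_ext_le n f g : (forall k, (k <= n)%nat -> f k = g k) -> csum n f = csum n g.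
Proof. intros H. rewrite !csum_sm. apply sm_ext_lt. intros; apply H; lia. Qed.

Lemma csum_minus n f g : csum n (fun k => Cminus (f k) (g k)) = Cminus (csum n f) (csum n g).
Proof. induction n; simpl. auto. rewrite IHn. ring. Qed.

Lemma csum_scal n c f : csum n (fun k => Cmult c (f k)) = Cmult c (csum n f).
Proof. induction n; simpl. auto. rewrite IHn. ring. Qed.

Definition Fs n s rho := csum n (fun k => Cdiv (nbinom n k) (Cmult (Cmult (Cplus (cn k) (RtoC 2)) (Cplus (cn k) s)) (Cbinom (Cplus (cn n) rho) (Cplus (cn k) s)))).
Definition Gs n s rho := csum n (fun k => Cdiv (Cmult (nbinom n k) (sgn k)) (Cmult (Cmult (Cmult (Cplus (cn k) (RtoC 1)) (Cplus (cn k) (RtoC 2))) (Cplus (cn k) s)) (Cbinom (Cplus (cn k) rho) (Cplus (cn k) s)))).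

Lemma FG_eq n s rho : s <> RtoC 0 -> ~ negint s -> nonpole (Cplus rho (RtoC 1)) -> nonpole (Cplus (Cminus rho s) (RtoC 1)) ->
  Fs n s rho = Gs n s rho.
Proof.
  intros Hs0 Hs HR Hb.
  pose proof (np_of_negint s Hs) as Ha.
  set (a1 := Cplus s (RtoC 1)) in *. set (bb := Cplus (Cminus rho s) (RtoC 1)) in *. set (R1 := Cplus rho (RtoC 1)) in *.
  assert (GR : CGamma R1 <> RtoC 0) by (apply CGamma_nz; auto).
  assert (PRn : poch R1 n <> RtoC 0) by (apply poch_nz; auto).
  set (Kc := Cmult (Cmult (CGamma a1) (CGamma bb)) (Cinv (Cmult (Cmult s (poch R1 n)) (CGamma R1)))).
  assert (E1 : forall k, CGamma (Cplus (Cplus (cn k) s) (RtoC 1)) = Cmult (poch a1 k) (CGamma a1)).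
  { intros k. rewrite <- Gamma_poch by auto. f_equal. unfold a1, cn. ring. }
  assert (Pa1 : forall k, poch a1 k = Cdiv (Cmult (poch s k) (Cplus s (RtoC (INR k)))) s).
  { intros k. rewrite <- poch_shift1. unfold a1. field. auto. }
  assert (HF : Fs n s rho = Cmult Kc (sm (fun k => Cmult (Cmult (Cmult (bC n k) (poch s k)) (poch bb (n - k))) (Cinv (Cplus (cn k) (RtoC 2)))) (S n))).
  { unfold Fs. rewrite csum_sm, <- sm_scal. apply sm_ext_lt. intros k Hk.
    unfold Cdiv. rewrite Cinv_mult_all, Cinv_Cbinom, E1.
    assert (E2 : CGamma (Cplus (Cminus (Cplus (cn n) rho) (Cplus (cn k) s)) (RtoC 1)) = Cmult (poch bb (n - k)) (CGamma bb)).
    { rewrite <- Gamma_poch by auto. f_equal. unfold bb, cn. rewrite minus_INR by lia. rewrite RtoC_minus. ring. }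
    assert (E3 : CGamma (Cplus (Cplus (cn n) rho) (RtoC 1)) = Cmult (poch R1 n) (CGamma R1)).
    { rewrite <- Gamma_poch by auto. f_equal. unfold R1, cn. ring. }
    rewrite E2, E3, Pa1. unfold Kc, nbinom, bC.
    assert (C1 := cks_nz s k Hs0 Hs). assert (C2 := cn_nz2 k).
    replace (Cplus s (RtoC (INR k))) with (Cplus (cn k) s) by (unfold cn; ring).
    field. repeat split; auto. }
  assert (HG : Gs n s rho = Cmult Kc (sm (fun j => Cmult (Cmult (Cmult (bC n j) (poch s j)) (poch (Cplus (Cplus s bb) (RtoC (INR j))) (n - j))) (gf j)) (S n))).
  { unfold Gs. rewrite csum_sm, <- sm_scal. apply sm_ext_lt. intros k Hk.
    unfold Cdiv. rewrite Cinv_mult_all, Cinv_Cbinom, E1.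
    assert (E2 : CGamma (Cplus (Cminus (Cplus (cn k) rho) (Cplus (cn k) s)) (RtoC 1)) = CGamma bb).
    { f_equal. unfold bb. ring. }
    assert (E3 : CGamma (Cplus (Cplus (cn k) rho) (RtoC 1)) = Cmult (poch R1 k) (CGamma R1)).
    { rewrite <- Gamma_poch by auto. f_equal. unfold R1, cn. ring. }
    assert (E4 : poch R1 n = Cmult (poch R1 k) (poch (Cplus (Cplus s bb) (RtoC (INR k))) (n - k))).
    { replace n with (k + (n - k))%nat at 1 by lia. rewrite poch_add. f_equal. f_equal. unfold R1, bb. ring. }
    assert (PRk : poch R1 k <> RtoC 0) by (apply poch_nz; auto).
    assert (PRk2 : poch (Cplus (Cplus s bb) (RtoC (INR k))) (n - k) <> RtoC 0).
    { apply poch_nz. apply (nonpole_eq (Cplus R1 (RtoC (INR k)))). unfold R1, bb. ring. apply nonpole_add; auto. }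
    rewrite E2, E3, Pa1. unfold Kc, nbinom, bC, gf, sgn. rewrite E4.
    assert (C1 := cks_nz s k Hs0 Hs). assert (C2 := cn_nz2 k). assert (C3 := cn_nz1 k).
    replace (Cplus s (RtoC (INR k))) with (Cplus (cn k) s) by (unfold cn; ring).
    field. repeat split; auto. }
  rewrite HF, HG. f_equal. apply identA.
Qed.


Theorem theorem22 (n : nat) (r s : C) :
  ~ negint r -> ~ negint s -> s <> RtoC 0 -> ~ negint (Cminus r s) ->
  Cminus
    (csum n (fun k =>
       Cdiv (Cmult (nbinom n k) (Hc (Cminus (Cplus (cn (n - k)) r) s)))
            (Cmult (Cmult (Cplus (cn k) (RtoC 2)) (Cplus (cn k) s))
                   (Cbinom (Cplus (cn n) r) (Cplus (cn k) s)))))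
    (Cmult (Hc (Cplus (cn n) r))
       (csum n (fun k =>
          Cdiv (nbinom n k)
               (Cmult (Cmult (Cplus (cn k) (RtoC 2)) (Cplus (cn k) s))
                      (Cbinom (Cplus (cn n) r) (Cplus (cn k) s))))))
  =
  Cminus
    (Cmult (Hc (Cminus r s))
       (csum n (fun k =>
          Cdiv (Cmult (nbinom n k) (sgn k))
               (Cmult (Cmult (Cmult (Cplus (cn k) (RtoC 1)) (Cplus (cn k) (RtoC 2)))
                             (Cplus (cn k) s))
                      (Cbinom (Cplus (cn k) r) (Cplus (cn k) s))))))
    (csum n (fun k =>
       Cdiv (Cmult (Cmult (nbinom n k) (sgn k)) (Hc (Cplus (cn k) r)))
            (Cmult (Cmult (Cmult (Cplus (cn k) (RtoC 1)) (Cplus (cn k) (RtoC 2)))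
                          (Cplus (cn k) s))
                   (Cbinom (Cplus (cn k) r) (Cplus (cn k) s))))).
Proof.
  intros Hr Hs Hs0 Hrs.
  pose proof (np_of_negint r Hr) as Nr. pose proof (np_of_negint s Hs) as Ns. pose proof (np_of_negint _ Hrs) as Nrs.
  set (LHS := Cminus _ _) at 1. set (RHS := Cminus _ _).
  assert (dF : is_derive (K := C_AbsRing) (V := C_NormedModule) (Fs n s) r LHS).
  { unfold Fs.
    apply (is_derive_ext (fun y => csum n (fun k => Cmult (Cmult (nbinom n k) (Cinv (Cmult (Cplus (cn k) (RtoC 2)) (Cplus (cn k) s))))
                                                     (Cinv (Cbinom (Cplus (cn n) y) (Cplus (cn k) s)))))).
    { intros t. cbv beta. apply csum_ext_le. intros k _. unfold Cdiv. rewrite !Cinv_mult_all. ring. }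
    eapply is_derive_eq.
    - apply (is_derive_csum n (fun k y => Cmult (Cmult (nbinom n k) (Cinv (Cmult (Cplus (cn k) (RtoC 2)) (Cplus (cn k) s))))
                                                     (Cinv (Cbinom (Cplus (cn n) y) (Cplus (cn k) s))))).
      intros k Hk.
      assert (H1 : nonpole (Cplus (Cplus (cn k) s) (RtoC 1))).
      { apply (nonpole_eq (Cplus (Cplus s (RtoC 1)) (RtoC (INR k)))). unfold cn; ring. apply nonpole_add; auto. }
      assert (H2 : nonpole (Cplus (Cminus (Cplus (cn n) r) (Cplus (cn k) s)) (RtoC 1))).
      { apply (nonpole_eq (Cplus (Cplus (Cminus r s) (RtoC 1)) (RtoC (INR (n - k))))).
        unfold cn. rewrite minus_INR, RtoC_minus by lia. ring. apply nonpole_add; auto. }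
      assert (H3 : nonpole (Cplus (Cplus (cn n) r) (RtoC 1))).
      { apply (nonpole_eq (Cplus (Cplus r (RtoC 1)) (RtoC (INR n)))). unfold cn; ring. apply nonpole_add; auto. }
      pose proof (phi_deriv (cn n) (Cplus (cn k) s) r H1 H2 H3) as P.
      exact (is_derive_Cmult _ _ r _ _ (is_derive_Cconst _ r) P).
    - simpl. unfold LHS. rewrite <- csum_scal, <- csum_minus. apply csum_ext_le. intros k Hk.
      assert (EA : Cplus (Cminus (Cplus (cn (n - k)) r) s) (RtoC 1) = Cplus (Cminus (Cplus (cn n) r) (Cplus (cn k) s)) (RtoC 1)).
      { unfold cn. rewrite minus_INR, RtoC_minus by lia. ring. }
      unfold Hc. rewrite EA. unfold Cdiv. rewrite !Cinv_mult_all. ring. }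
  assert (dG : is_derive (K := C_AbsRing) (V := C_NormedModule) (Gs n s) r RHS).
  { unfold Gs.
    apply (is_derive_ext (fun y => csum n (fun k => Cmult (Cmult (Cmult (nbinom n k) (sgn k)) (Cinv (Cmult (Cmult (Cplus (cn k) (RtoC 1)) (Cplus (cn k) (RtoC 2))) (Cplus (cn k) s))))
                                                     (Cinv (Cbinom (Cplus (cn k) y) (Cplus (cn k) s)))))).
    { intros t. cbv beta. apply csum_ext_le. intros k _. unfold Cdiv. rewrite !Cinv_mult_all. ring. }
    eapply is_derive_eq.
    - apply (is_derive_csum n (fun k y => Cmult (Cmult (Cmult (nbinom n k) (sgn k)) (Cinv (Cmult (Cmult (Cplus (cn k) (RtoC 1)) (Cplus (cn k) (RtoC 2))) (Cplus (cn k) s))))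
                                                     (Cinv (Cbinom (Cplus (cn k) y) (Cplus (cn k) s))))).
      intros k Hk.
      assert (H1 : nonpole (Cplus (Cplus (cn k) s) (RtoC 1))).
      { apply (nonpole_eq (Cplus (Cplus s (RtoC 1)) (RtoC (INR k)))). unfold cn; ring. apply nonpole_add; auto. }
      assert (H2 : nonpole (Cplus (Cminus (Cplus (cn k) r) (Cplus (cn k) s)) (RtoC 1))).
      { apply (nonpole_eq (Cplus (Cminus r s) (RtoC 1))). ring. auto. }
      assert (H3 : nonpole (Cplus (Cplus (cn k) r) (RtoC 1))).
      { apply (nonpole_eq (Cplus (Cplus r (RtoC 1)) (RtoC (INR k)))). unfold cn; ring. apply nonpole_add; auto. }
      pose proof (phi_deriv (cn k) (Cplus (cn k) s) r H1 H2 H3) as P.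
      exact (is_derive_Cmult _ _ r _ _ (is_derive_Cconst _ r) P).
    - simpl. unfold RHS. rewrite <- csum_scal, <- csum_minus. apply csum_ext_le. intros k Hk.
      assert (EA : Cplus (Cminus r s) (RtoC 1) = Cplus (Cminus (Cplus (cn k) r) (Cplus (cn k) s)) (RtoC 1)) by ring.
      unfold Hc. rewrite EA. unfold Cdiv. rewrite !Cinv_mult_all. ring. }
  destruct (nonpole_bound _ Nr) as [m1 [Hm1 Hb1]].
  destruct (nonpole_bound _ Nrs) as [m2 [Hm2 Hb2]].
  assert (Hloc : forall y, Cmod (Cminus y r) < Rmin m1 m2 -> Fs n s y = Gs n s y).
  { intros y Hy. apply FG_eq; auto.
    - apply (nonpole_eq (Cplus (Cplus r (RtoC 1)) (Cminus y r))). ring.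
      apply (nonpole_near _ m1); auto. eapply Rlt_le_trans. apply Hy. apply Rmin_l.
    - apply (nonpole_eq (Cplus (Cplus (Cminus r s) (RtoC 1)) (Cminus y r))). ring.
      apply (nonpole_near _ m2); auto. eapply Rlt_le_trans. apply Hy. apply Rmin_r. }
  assert (dG' : is_derive (K := C_AbsRing) (V := C_NormedModule) (Gs n s) r LHS).
  { apply (filterdiff_ext_loc (K:=C_AbsRing) (U:=AbsRing_NormedModule C_AbsRing) (V:=C_NormedModule) (Fs n s)).
    - exists (mkposreal _ (Rmin_pos _ _ Hm1 Hm2)). intros y Hy. apply Hloc. exact Hy.
    - intros x Hx. apply (is_filter_lim_locally_unique (K:=C_AbsRing) (V:=AbsRing_NormedModule C_AbsRing)) in Hx. subst x.
      apply Hloc. replace (Cminus r r) with (RtoC 0) by ring. rewrite Cmod_0. apply Rmin_pos; auto.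
    - exact dF. }
  rewrite <- (is_C_derive_unique _ _ _ dG'). apply is_C_derive_unique. exact dG.
Qed.
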